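(* Let $a>0$ and let $L_2=a\mathbb{Z}^3\cup a(\mathbb{Z}+\tfrac12)^3\cup W$. The Voronoi cell of the origin with respect to $L_2$ is the tetrakis hexahedron $$\operatorname{conv}\Big(\{(\pm\tfrac{5a}{24},\pm\tfrac{5a}{24},\pm\tfrac{5a}{24})\}\cup\{(\pm\tfrac{5a}{16},0,0),(0,\pm\tfrac{5a}{16},0),(0,0,\pm\tfrac{5a}{16})\}\Big).$$ This is the cube $[-5a/24,5a/24]^3$ with a square pyramid of height $5a/48$ glued onto each of its six faces. Its volume is $$V^{(2)}_\Gamma=\frac{125}{1152}a^3 .$$ The same holds, after translation, for the Voronoi cell of every point of $a\mathbb{Z}^3\cup a(\mathbb{Z}+\tfrac12)^3$ with respect to $L_2$.
   Context: Fix $a>0$. $W\subset\mathbb{R}^3$ is the set of all points $a(u_1,u_2,u_3)$ such that $(u_1,u_2,u_3)$ is a permutation of a triple $(i,\ j+\tfrac12,\ k+\varepsilon)$ with $i,j,k\in\mathbb{Z}$ and $\varepsilon\in\{\tfrac14,\tfrac34\}$. For a discrete set $P\subset\mathbb{R}^3$ and $p\in P$, the Voronoi cell of $p$ with respect to $P$ is $\{x\in\mathbb{R}^3: |x-p|\le|x-q|\ \text{for all } q\in P\}$. *)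

(* Defs.v *)
From Stdlib Require Import Reals Lra Lia ZArith List Permutation Classical ClassicalEpsilon.
Open Scope R_scope.
Import ListNotations.

Definition pt := (R * R * R)%type.
Definition mkpt (x y z : R) : pt := (x, y, z).
Definition px (p : pt) : R := fst (fst p).
Definition py (p : pt) : R := snd (fst p).
Definition pz (p : pt) : R := snd p.

Definition padd (p q : pt) : pt := mkpt (px p + px q) (py p + py q) (pz p + pz q).
Definition psub (p q : pt) : pt := mkpt (px p - px q) (py p - py q) (pz p - pz q).
Definition pscale (c : R) (p : pt) : pt := mkpt (c * px p) (c * py p) (c * pz p).
Definition origin : pt := mkpt 0 0 0.

Definition norm3 (p : pt) : R := sqrt (px p ^ 2 + py p ^ 2 + pz p ^ 2).

Definition inZ3 (a : R) (p : pt) : Prop :=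
  exists i j k : Z, p = mkpt (a * IZR i) (a * IZR j) (a * IZR k).

Definition inZh3 (a : R) (p : pt) : Prop :=
  exists i j k : Z, p = mkpt (a * (IZR i + 1/2)) (a * (IZR j + 1/2)) (a * (IZR k + 1/2)).

Definition inW (a : R) (p : pt) : Prop :=
  exists (i j k : Z) (eps u1 u2 u3 : R),
    (eps = 1/4 \/ eps = 3/4) /\
    Permutation [u1; u2; u3] [IZR i; IZR j + 1/2; IZR k + eps] /\
    p = mkpt (a * u1) (a * u2) (a * u3).

Definition L2 (a : R) (p : pt) : Prop := inZ3 a p \/ inZh3 a p \/ inW a p.

Definition voronoi (P : pt -> Prop) (p : pt) (x : pt) : Prop :=
  forall q, P q -> norm3 (psub x p) <= norm3 (psub x q).

Fixpoint sumR (l : list R) : R := match l with [] => 0 | r :: t => r + sumR t end.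

Definition conv (l : list pt) (x : pt) : Prop :=
  exists w : list R,
    length w = length l /\ Forall (fun t => 0 <= t) w /\ sumR w = 1 /\
    x = mkpt (sumR (map (fun '(t, v) => t * px v) (combine w l)))
             (sumR (map (fun '(t, v) => t * py v) (combine w l)))
             (sumR (map (fun '(t, v) => t * pz v) (combine w l))).

Definition cube_verts (c : R) : list pt :=
  [mkpt c c c; mkpt c c (-c); mkpt c (-c) c; mkpt c (-c) (-c);
   mkpt (-c) c c; mkpt (-c) c (-c); mkpt (-c) (-c) c; mkpt (-c) (-c) (-c)].
Definition octa_verts (d : R) : list pt :=
  [mkpt d 0 0; mkpt (-d) 0 0; mkpt 0 d 0; mkpt 0 (-d) 0; mkpt 0 0 d; mkpt 0 0 (-d)].
Definition tetrakis (a : R) : list pt := cube_verts (5*a/24) ++ octa_verts (5*a/16).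

Definition in_cube (c : R) (x : pt) : Prop :=
  -c <= px x <= c /\ -c <= py x <= c /\ -c <= pz x <= c.

Definition pyramids (c h : R) : list (list pt) :=
  [ [mkpt c c c; mkpt c c (-c); mkpt c (-c) c; mkpt c (-c) (-c); mkpt (c+h) 0 0];
    [mkpt (-c) c c; mkpt (-c) c (-c); mkpt (-c) (-c) c; mkpt (-c) (-c) (-c); mkpt (-(c+h)) 0 0];
    [mkpt c c c; mkpt c c (-c); mkpt (-c) c c; mkpt (-c) c (-c); mkpt 0 (c+h) 0];
    [mkpt c (-c) c; mkpt c (-c) (-c); mkpt (-c) (-c) c; mkpt (-c) (-c) (-c); mkpt 0 (-(c+h)) 0];
    [mkpt c c c; mkpt c (-c) c; mkpt (-c) c c; mkpt (-c) (-c) c; mkpt 0 0 (c+h)];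
    [mkpt c c (-c); mkpt c (-c) (-c); mkpt (-c) c (-c); mkpt (-c) (-c) (-c); mkpt 0 0 (-(c+h))] ].

Definition indic (P : Prop) : R := if excluded_middle_informative P then 1 else 0.

Definition zrange (m : nat) : list Z :=
  map (fun k => (Z.of_nat k - Z.of_nat m)%Z) (seq 0 (2 * m + 1)).

(* (1/N^3) * #{ (i,j,k) in Z^3, |i|,|j|,|k| <= N^2 : (i/N, j/N, k/N) in S }, N = n+1.
   The box radius N^2/N = N eventually contains any bounded set. *)
Definition lattice_vol (S : pt -> Prop) (n : nat) : R :=
  let N := Datatypes.S n in
  let m := (N * N)%nat in
  / (INR N ^ 3) *
  sumR (map (fun i => sumR (map (fun j => sumR (map (fun k =>
     indic (S (mkpt (IZR i / INR N) (IZR j / INR N) (IZR k / INR N))))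
     (zrange m))) (zrange m))) (zrange m)).

Definition has_volume (S : pt -> Prop) (v : R) : Prop := Un_cv (lattice_vol S) v.

(* Main.v *)
Require Import Defs.
From Stdlib Require Import Reals Lra Lia ZArith List Permutation Classical ClassicalEpsilon.
Open Scope R_scope.
Import ListNotations.

Lemma pt_eq (p q : pt) : px p = px q -> py p = py q -> pz p = pz q -> p = q.
Proof. destruct p as [[x y] z], q as [[x' y'] z']; unfold px, py, pz; simpl; intros; subst; reflexivity. Qed.

Definition SX (w : list R) (l : list pt) := sumR (map (fun '(t, v) => t * px v) (combine w l)).
Definition SY (w : list R) (l : list pt) := sumR (map (fun '(t, v) => t * py v) (combine w l)).
Definition SZ (w : list R) (l : list pt) := sumR (map (fun '(t, v) => t * pz v) (combine w l)).

Definition cone (l : list pt) (s : R) (x : pt) : Prop :=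
  exists w : list R,
    length w = length l /\ Forall (fun t => 0 <= t) w /\ sumR w = s /\
    x = mkpt (SX w l) (SY w l) (SZ w l).

Lemma conv_cone l x : conv l x <-> cone l 1 x.
Proof. reflexivity. Qed.

Lemma cone_cons v l s x : cone (v :: l) s x ->
  exists t x', 0 <= t /\ cone l (s - t) x' /\ x = padd (pscale t v) x'.
Proof.
  intros [w [Hl [Hf [Hs Hx]]]]. destruct w as [|t w]; simpl in Hl; try discriminate.
  inversion Hf; subst. exists t, (mkpt (SX w l) (SY w l) (SZ w l)). split; auto. split.
  - exists w. repeat split; auto; simpl; lra.
  - apply pt_eq; unfold SX, SY, SZ, padd, pscale, mkpt, px, py, pz; simpl; reflexivity.
Qed.

Lemma cone_nil s x : cone [] s x -> s = 0 /\ x = mkpt 0 0 0.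
Proof. intros [w [Hl [Hf [Hs Hx]]]]. destruct w; simpl in Hl; try discriminate. simpl in Hs.
  split; [auto| rewrite Hx; reflexivity]. Qed.

Lemma cone_zero l : cone l 0 (mkpt 0 0 0).
Proof.
  exists (repeat 0 (length l)). rewrite repeat_length. repeat split; auto.
  - apply Forall_forall. intros t Ht. apply repeat_spec in Ht. lra.
  - induction l; simpl; auto. rewrite IHl; lra.
  - apply pt_eq; unfold SX, SY, SZ, mkpt, px, py, pz; simpl; induction l; simpl; auto;
    rewrite <- IHl; simpl; ring.
Qed.

Fixpoint addl (w w' : list R) : list R :=
  match w, w' with t :: w, t' :: w' => (t + t') :: addl w w' | _, _ => [] end.

Lemma cone_add l s s' x y : cone l s x -> cone l s' y -> cone l (s + s') (padd x y).
Proof.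
  intros [w [Hl [Hf [Hs Hx]]]] [w' [Hl' [Hf' [Hs' Hy]]]]. subst.
  exists (addl w w'). revert w w' Hl Hf Hl' Hf'.
  induction l as [|v l IH]; intros w w' Hl Hf Hl' Hf'.
  - destruct w, w'; simpl in *; try discriminate. repeat split; auto.
    lra. apply pt_eq; unfold padd, SX, SY, SZ, mkpt, px, py, pz; simpl; lra.
  - destruct w as [|t w], w' as [|t' w']; simpl in *; try discriminate.
    inversion Hf; inversion Hf'; subst.
    destruct (IH w w') as [K1 [K2 [K3 H4]]]; auto.
    repeat split.
    + simpl; lia.
    + constructor; auto; lra.
    + simpl. rewrite K3. lra.
    + pose proof (f_equal px H4) as E1; pose proof (f_equal py H4) as E2; pose proof (f_equal pz H4) as E3.
      apply pt_eq; unfold padd, SX, SY, SZ, mkpt, px, py, pz in *; simpl in *; lra.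
Qed.

Lemma cone_scale l s x t : 0 <= t -> cone l s x -> cone l (t * s) (pscale t x).
Proof.
  intros Ht [w [Hl [Hf [Hs Hx]]]]. subst. exists (map (fun u => t * u) w).
  revert w Hl Hf. induction l as [|v l IH]; intros w Hl Hf.
  - destruct w; simpl in *; try discriminate. repeat split; auto.
    lra. apply pt_eq; unfold pscale, SX, SY, SZ, mkpt, px, py, pz; simpl; lra.
  - destruct w as [|u w]; simpl in *; try discriminate. inversion Hf; subst.
    destruct (IH w) as [K1 [K2 [K3 H4]]]; auto.
    repeat split.
    + simpl; lia.
    + constructor; auto. apply Rmult_le_pos; auto.
    + simpl. rewrite K3. ring.
    + pose proof (f_equal px H4) as E1; pose proof (f_equal py H4) as E2; pose proof (f_equal pz H4) as E3.
      apply pt_eq; unfold pscale, SX, SY, SZ, mkpt, px, py, pz in *; simpl in *; nra.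
Qed.

Lemma cone_vert l v t : In v l -> 0 <= t -> cone l t (pscale t v).
Proof.
  intros Hv Ht. induction l as [|u l IH]; simpl in Hv; [contradiction|].
  destruct Hv as [<-|Hv].
  - destruct (cone_zero l) as [w [Hl [Hf [Hs Hx]]]].
    exists (t :: w). split; [simpl; auto|]. split; [constructor; auto; lra|]. split; [simpl; lra|].
    pose proof (f_equal px Hx) as E1; pose proof (f_equal py Hx) as E2; pose proof (f_equal pz Hx) as E3.
      apply pt_eq; unfold pscale, SX, SY, SZ, mkpt, px, py, pz in *; simpl in *; lra.
  - destruct (IH Hv) as [w [Hl [Hf [Hs Hx]]]].
    exists (0 :: w). split; [simpl; auto|]. split; [constructor; auto; lra|]. split; [simpl; lra|].
    pose proof (f_equal px Hx) as E1; pose proof (f_equal py Hx) as E2; pose proof (f_equal pz Hx) as E3.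
      apply pt_eq; unfold pscale, SX, SY, SZ, mkpt, px, py, pz in *; simpl in *; lra.
Qed.

Lemma cone_eq l s s' x x' : cone l s x -> s = s' -> x = x' -> cone l s' x'.
Proof. intros H -> ->; auto. Qed.

Lemma cone_sub l m s x : cone l s x -> (forall v, In v l -> exists u, In u m /\ v = u) -> cone m s x.
Proof.
  revert s x. induction l as [|v l IH]; intros s x H Hsub.
  - apply cone_nil in H as [-> ->]. apply cone_zero.
  - apply cone_cons in H as [t [x' [Ht [Hc ->]]]].
    destruct (Hsub v (or_introl eq_refl)) as [u [Hu ->]].
    replace s with (t + (s - t)) by ring. apply cone_add.
    + apply cone_vert; auto.
    + apply IH; auto. intros v' Hv'. apply Hsub. right; auto.
Qed.

Lemma conv_sub l m x : conv l x -> (forall v, In v l -> exists u, In u m /\ v = u) -> conv m x.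
Proof. intros; eapply cone_sub; eauto. Qed.

Lemma conv_vert l v : In v l -> conv l v.
Proof. intros H. apply (cone_eq _ _ _ _ _ (cone_vert l v 1 H ltac:(lra))); auto.
  apply pt_eq; unfold pscale, mkpt, px, py, pz; simpl; ring. Qed.

Lemma conv_seg l p q x t : conv l p -> conv l q -> 0 <= t <= 1 ->
  px x = t * px p + (1 - t) * px q ->
  py x = t * py p + (1 - t) * py q ->
  pz x = t * pz p + (1 - t) * pz q -> conv l x.
Proof.
  intros Hp Hq Ht H1 H2 H3.
  pose proof (cone_add _ _ _ _ _ (cone_scale _ _ _ t ltac:(lra) Hp) (cone_scale _ _ _ (1-t) ltac:(lra) Hq)) as H.
  eapply cone_eq; [exact H| ring |].
  apply pt_eq; unfold padd, pscale, mkpt, px, py, pz in *; simpl in *; lra.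
Qed.

Definition lin (al be ga : R) (p : pt) : R := al * px p + be * py p + ga * pz p.

Lemma cone_half l s x al be ga de : cone l s x ->
  (forall v, In v l -> lin al be ga v <= de) -> lin al be ga x <= de * s.
Proof.
  revert s x. induction l as [|v l IH]; intros s x H Hv.
  - apply cone_nil in H as [-> ->]. unfold lin, mkpt, px, py, pz; simpl; lra.
  - apply cone_cons in H as [t [x' [Ht [Hc ->]]]].
    specialize (IH _ _ Hc (fun u Hu => Hv u (or_intror Hu))).
    specialize (Hv v (or_introl eq_refl)).
    unfold lin, padd, pscale, mkpt, px, py, pz in *; simpl in *. nra.
Qed.

Lemma conv_half l x al be ga de : conv l x ->
  (forall v, In v l -> lin al be ga v <= de) -> lin al be ga x <= de.
Proof. intros H Hv. pose proof (cone_half _ _ _ _ _ _ _ H Hv). lra. Qed.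

Definition lmap (a1 b1 c1 a2 b2 c2 a3 b3 c3 : R) (p : pt) : pt :=
  mkpt (lin a1 b1 c1 p) (lin a2 b2 c2 p) (lin a3 b3 c3 p).

Lemma cone_map l s x a1 b1 c1 a2 b2 c2 a3 b3 c3 : cone l s x ->
  cone (map (lmap a1 b1 c1 a2 b2 c2 a3 b3 c3) l) s (lmap a1 b1 c1 a2 b2 c2 a3 b3 c3 x).
Proof.
  revert s x. induction l as [|v l IH]; intros s x H.
  - apply cone_nil in H as [-> ->]. eapply cone_eq; [apply cone_zero| reflexivity|].
    apply pt_eq; unfold lmap, lin, mkpt, px, py, pz; simpl; ring.
  - apply cone_cons in H as [t [x' [Ht [Hc ->]]]]. simpl.
    set (f := lmap a1 b1 c1 a2 b2 c2 a3 b3 c3).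
    assert (Htl : cone (f v :: map f l) (s - t) (f x')).
    { apply cone_sub with (l := map f l). apply IH; auto.
      intros u Hu. exists u; split; auto. right; auto. }
    pose proof (cone_add _ _ _ _ _ (cone_vert (f v :: map f l) (f v) t (or_introl eq_refl) Ht) Htl) as Hs.
    eapply cone_eq; [exact Hs| ring|].
    apply pt_eq; unfold f, lmap, lin, padd, pscale, mkpt, px, py, pz; simpl; ring.
Qed.


Lemma frac01 N D : 0 < D -> 0 <= N <= D -> 0 <= N / D <= 1.
Proof.
  intros HD [H1 H2]. unfold Rdiv. split.
  - apply Rmult_le_pos; auto. left; apply Rinv_0_lt_compat; auto.
  - rewrite <- (Rinv_r D) by lra. apply Rmult_le_compat_r; auto. left; apply Rinv_0_lt_compat; auto.
Qed.

Lemma conv_eqp l p q : conv l p -> p = q -> conv l q.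
Proof. intros H <-; auto. Qed.

Ltac inlist := repeat (first [left; reflexivity | right]).
Ltac ptsimpl := unfold padd, psub, pscale, lmap, lin, mkpt, px, py, pz in *; simpl in *.

Definition Hc (a : R) (x : pt) : Prop :=
  2*Rabs(px x) + Rabs(py x) <= 5*a/8 /\ 2*Rabs(px x) + Rabs(pz x) <= 5*a/8 /\
  2*Rabs(py x) + Rabs(px x) <= 5*a/8 /\ 2*Rabs(py x) + Rabs(pz x) <= 5*a/8 /\
  2*Rabs(pz x) + Rabs(px x) <= 5*a/8 /\ 2*Rabs(pz x) + Rabs(py x) <= 5*a/8.

Lemma abs_pair x y D :
  2*x + y <= D -> 2*x - y <= D -> -2*x + y <= D -> -2*x - y <= D -> 2*Rabs x + Rabs y <= D.
Proof. intros. unfold Rabs; destruct (Rcase_abs x), (Rcase_abs y); lra. Qed.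

Ltac vtx := intros v Hv; unfold tetrakis, cube_verts, octa_verts in Hv; simpl in Hv;
  repeat match goal with H : _ \/ _ |- _ => destruct H as [<-|H] end;
  try contradiction; ptsimpl; lra.

Lemma conv_H a x : 0 < a -> conv (tetrakis a) x -> Hc a x.
Proof.
  intros ha H.
  assert (G : forall al be ga, (forall v, In v (tetrakis a) -> lin al be ga v <= 5*a/8) ->
     lin al be ga x <= 5*a/8) by (intros; eapply conv_half; eauto).
  destruct x as [[x1 x2] x3].
  unfold Hc; repeat split; apply abs_pair.
  - pose proof (G 2 1 0 ltac:(vtx)); ptsimpl; lra.
  - pose proof (G 2 (-1) 0 ltac:(vtx)); ptsimpl; lra.
  - pose proof (G (-2) 1 0 ltac:(vtx)); ptsimpl; lra.
  - pose proof (G (-2) (-1) 0 ltac:(vtx)); ptsimpl; lra.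
  - pose proof (G 2 0 1 ltac:(vtx)); ptsimpl; lra.
  - pose proof (G 2 0 (-1) ltac:(vtx)); ptsimpl; lra.
  - pose proof (G (-2) 0 1 ltac:(vtx)); ptsimpl; lra.
  - pose proof (G (-2) 0 (-1) ltac:(vtx)); ptsimpl; lra.
  - pose proof (G 1 2 0 ltac:(vtx)); ptsimpl; lra.
  - pose proof (G (-1) 2 0 ltac:(vtx)); ptsimpl; lra.
  - pose proof (G 1 (-2) 0 ltac:(vtx)); ptsimpl; lra.
  - pose proof (G (-1) (-2) 0 ltac:(vtx)); ptsimpl; lra.
  - pose proof (G 0 2 1 ltac:(vtx)); ptsimpl; lra.
  - pose proof (G 0 2 (-1) ltac:(vtx)); ptsimpl; lra.
  - pose proof (G 0 (-2) 1 ltac:(vtx)); ptsimpl; lra.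
  - pose proof (G 0 (-2) (-1) ltac:(vtx)); ptsimpl; lra.
  - pose proof (G 1 0 2 ltac:(vtx)); ptsimpl; lra.
  - pose proof (G (-1) 0 2 ltac:(vtx)); ptsimpl; lra.
  - pose proof (G 1 0 (-2) ltac:(vtx)); ptsimpl; lra.
  - pose proof (G (-1) 0 (-2) ltac:(vtx)); ptsimpl; lra.
  - pose proof (G 0 1 2 ltac:(vtx)); ptsimpl; lra.
  - pose proof (G 0 (-1) 2 ltac:(vtx)); ptsimpl; lra.
  - pose proof (G 0 1 (-2) ltac:(vtx)); ptsimpl; lra.
  - pose proof (G 0 (-1) (-2) ltac:(vtx)); ptsimpl; lra.
Qed.

Lemma cube_conv a x : 0 < a -> in_cube (5*a/24) x -> conv (tetrakis a) x.
Proof.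
  intros ha Hx. set (c := 5*a/24). assert (hc : 0 < c) by (unfold c; lra).
  assert (V : forall s1 s2 s3, (s1 = c \/ s1 = -c) -> (s2 = c \/ s2 = -c) -> (s3 = c \/ s3 = -c) ->
     conv (tetrakis a) (mkpt s1 s2 s3)).
  { intros s1 s2 s3 H1 H2 H3. apply conv_vert. unfold tetrakis, cube_verts, c in *.
    destruct H1 as [->| ->], H2 as [->| ->], H3 as [->| ->]; simpl; inlist. }
  assert (S1 : forall x1 s2 s3, -c <= x1 <= c -> (s2 = c \/ s2 = -c) -> (s3 = c \/ s3 = -c) ->
     conv (tetrakis a) (mkpt x1 s2 s3)).
  { intros x1 s2 s3 Hx1 H2 H3.
    apply (conv_seg _ (mkpt c s2 s3) (mkpt (-c) s2 s3) _ ((x1 + c)/(2*c))).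
    - apply V; auto.
    - apply V; auto.
    - apply frac01; lra.
    - ptsimpl. field. lra.
    - ptsimpl. field. lra.
    - ptsimpl. field. lra. }
  assert (S2 : forall x1 x2 s3, -c <= x1 <= c -> -c <= x2 <= c -> (s3 = c \/ s3 = -c) ->
     conv (tetrakis a) (mkpt x1 x2 s3)).
  { intros x1 x2 s3 Hx1 Hx2 H3.
    apply (conv_seg _ (mkpt x1 c s3) (mkpt x1 (-c) s3) _ ((x2 + c)/(2*c))).
    - apply S1; auto.
    - apply S1; auto.
    - apply frac01; lra.
    - ptsimpl. field. lra.
    - ptsimpl. field. lra.
    - ptsimpl. field. lra. }
  destruct x as [[x1 x2] x3]. unfold in_cube in Hx. fold c in Hx. ptsimpl.
  destruct Hx as [Hx1 [Hx2 Hx3]].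
  apply (conv_seg _ (mkpt x1 x2 c) (mkpt x1 x2 (-c)) _ ((x3 + c)/(2*c))).
  - apply S2; auto.
  - apply S2; auto.
  - apply frac01; lra.
  - ptsimpl. field. lra.
  - ptsimpl. field. lra.
  - ptsimpl. field. lra.
Qed.

Definition F0 (a : R) : list pt := nth 0 (pyramids (5*a/24) (5*a/48)) [].

Definition Rpx (a : R) (x : pt) : Prop :=
  5*a/24 <= px x <= 5*a/16 /\ Rabs (py x) <= 2*(5*a/16 - px x) /\ Rabs (pz x) <= 2*(5*a/16 - px x).

Lemma pyr0_conv a x : 0 < a -> Rpx a x -> conv (F0 a) x.
Proof.
  intros ha Hx. set (c := 5*a/24). set (d := 5*a/16).
  assert (hc : 0 < c) by (unfold c; lra).
  destruct x as [[x1 x2] x3]. unfold Rpx in Hx. ptsimpl. fold c d in Hx.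
  destruct Hx as [[Hx1 Hx1'] [Hx2 Hx3]].
  assert (VA : conv (F0 a) (mkpt (c + 5*a/48) 0 0)) by (apply conv_vert; unfold F0; simpl; inlist).
  destruct (Req_dec x1 d) as [E|E].
  - subst x1. assert (x2 = 0) by (revert Hx2; unfold Rabs; destruct (Rcase_abs x2); lra).
    assert (x3 = 0) by (revert Hx3; unfold Rabs; destruct (Rcase_abs x3); lra). subst.
    apply (conv_eqp _ _ _ VA). apply pt_eq; ptsimpl; unfold c, d; lra.
  - set (r := 2*(d - x1)). assert (hr : 0 < r) by (unfold r; lra).
    assert (hrc : r <= c) by (unfold r, c, d in *; lra).
    assert (E1 : forall s2 s3, In (mkpt c s2 s3) (F0 a) -> conv (F0 a) (mkpt x1 (s2*r/c) (s3*r/c))).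
    { intros s2 s3 Hin.
      apply (conv_seg _ (mkpt c s2 s3) (mkpt (c + 5*a/48) 0 0) _ (r/c)).
      - apply conv_vert; auto.
      - auto.
      - apply frac01; lra.
      - ptsimpl. unfold r, c, d. field. lra.
      - ptsimpl. field. lra.
      - ptsimpl. field. lra. }
    assert (E2 : forall s3, In (mkpt c c s3) (F0 a) -> In (mkpt c (-c) s3) (F0 a) ->
       conv (F0 a) (mkpt x1 x2 (s3*r/c))).
    { intros s3 H1 H2.
      apply (conv_seg _ (mkpt x1 (c*r/c) (s3*r/c)) (mkpt x1 (-c*r/c) (s3*r/c)) _ ((x2 + r)/(2*r))).
      - apply E1; auto.
      - apply E1; auto.
      - apply frac01; unfold r in *; revert Hx2; unfold Rabs; destruct (Rcase_abs x2); lra.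
      - ptsimpl. field. lra.
      - ptsimpl. field. lra.
      - ptsimpl. field. lra. }
    apply (conv_seg _ (mkpt x1 x2 (c*r/c)) (mkpt x1 x2 (-c*r/c)) _ ((x3 + r)/(2*r))).
    + apply E2; unfold F0; simpl; inlist.
    + apply E2; unfold F0; simpl; inlist.
    + apply frac01; unfold r in *; revert Hx3; unfold Rabs; destruct (Rcase_abs x3); lra.
    + ptsimpl. field. lra.
    + ptsimpl. field. lra.
    + ptsimpl. field. lra.
Qed.

Lemma ex_in_cons (v u : pt) M : v = u \/ (exists u', In u' M /\ v = u') -> exists u', In u' (u::M) /\ v = u'.
Proof. intros [->|[u' [H1 H2]]]; [exists u; split; [left|]; auto| exists u'; split; [right|]; auto]. Qed.

Ltac findin := repeat (apply ex_in_cons; first [left; apply pt_eq; ptsimpl; lra | right]).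
Ltac subl := intros v Hv; simpl in Hv;
  repeat match goal with H : _ \/ _ |- _ => destruct H as [<-|H] end;
  try contradiction; findin.

Lemma pyr_map a x k b1 c1 d1 b2 c2 d2 b3 c3 d3 (g : pt) :
  0 < a -> Rpx a g ->
  lmap b1 c1 d1 b2 c2 d2 b3 c3 d3 g = x ->
  (forall v, In v (map (lmap b1 c1 d1 b2 c2 d2 b3 c3 d3) (F0 a)) ->
     exists u, In u (nth k (pyramids (5*a/24) (5*a/48)) []) /\ v = u) ->
  conv (nth k (pyramids (5*a/24) (5*a/48)) []) x.
Proof.
  intros ha Hg Hx Hs. apply conv_sub with (l := map (lmap b1 c1 d1 b2 c2 d2 b3 c3 d3) (F0 a)); auto.
  rewrite <- Hx. apply cone_map. apply pyr0_conv; auto.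
Qed.

Ltac abs_cases := unfold Rabs in *; repeat match goal with |- context [Rcase_abs ?t] => destruct (Rcase_abs t) end;
  repeat match goal with H : context [Rcase_abs ?t] |- _ => destruct (Rcase_abs t) end.

Lemma H_split a x : 0 < a -> Hc a x ->
  in_cube (5*a/24) x \/ exists k, (k < 6)%nat /\ conv (nth k (pyramids (5*a/24) (5*a/48)) []) x.
Proof.
  intros ha Hx. destruct x as [[x1 x2] x3]. unfold Hc in Hx; ptsimpl.
  destruct (Rle_dec (Rabs x1) (5*a/24)) as [A1|A1];
  [destruct (Rle_dec (Rabs x2) (5*a/24)) as [A2|A2];
   [destruct (Rle_dec (Rabs x3) (5*a/24)) as [A3|A3]|]|].
  - left. unfold in_cube; ptsimpl. abs_cases; lra.
  - right. destruct (Rle_dec 0 x3).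
    + exists 4%nat. split; [lia|]. apply (pyr_map a _ 4 0 0 1 0 1 0 1 0 0 (mkpt x3 x2 x1)); auto.
      * unfold Rpx; ptsimpl. abs_cases; lra.
      * apply pt_eq; ptsimpl; lra.
      * subl.
    + exists 5%nat. split; [lia|]. apply (pyr_map a _ 5 0 0 1 0 1 0 (-1) 0 0 (mkpt (-x3) x2 x1)); auto.
      * unfold Rpx; ptsimpl. abs_cases; lra.
      * apply pt_eq; ptsimpl; lra.
      * subl.
  - right. destruct (Rle_dec 0 x2).
    + exists 2%nat. split; [lia|]. apply (pyr_map a _ 2 0 1 0 1 0 0 0 0 1 (mkpt x2 x1 x3)); auto.
      * unfold Rpx; ptsimpl. abs_cases; lra.
      * apply pt_eq; ptsimpl; lra.
      * subl.
    + exists 3%nat. split; [lia|]. apply (pyr_map a _ 3 0 1 0 (-1) 0 0 0 0 1 (mkpt (-x2) x1 x3)); auto.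
      * unfold Rpx; ptsimpl. abs_cases; lra.
      * apply pt_eq; ptsimpl; lra.
      * subl.
  - right. destruct (Rle_dec 0 x1).
    + exists 0%nat. split; [lia|]. apply (pyr_map a _ 0 1 0 0 0 1 0 0 0 1 (mkpt x1 x2 x3)); auto.
      * unfold Rpx; ptsimpl. abs_cases; lra.
      * apply pt_eq; ptsimpl; lra.
      * subl.
    + exists 1%nat. split; [lia|]. apply (pyr_map a _ 1 (-1) 0 0 0 1 0 0 0 1 (mkpt (-x1) x2 x3)); auto.
      * unfold Rpx; ptsimpl. abs_cases; lra.
      * apply pt_eq; ptsimpl; lra.
      * subl.
Qed.

Lemma pyr_in_tet a F x : In F (pyramids (5*a/24) (5*a/48)) -> conv F x -> conv (tetrakis a) x.
Proof.
  intros HF Hx. apply conv_sub with (l := F); auto.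
  simpl in HF; repeat match goal with H : _ \/ _ |- _ => destruct H as [<-|H] end; try contradiction;
  intros v Hv; simpl in Hv;
  repeat match goal with H : _ \/ _ |- _ => destruct H as [<-|H] end;
  try contradiction; unfold tetrakis, cube_verts, octa_verts; cbn [app]; findin.
Qed.

Lemma H_conv a x : 0 < a -> Hc a x -> conv (tetrakis a) x.
Proof.
  intros ha H. destruct (H_split a x ha H) as [C|[k [Hk P]]].
  - apply cube_conv; auto.
  - eapply pyr_in_tet; [|exact P]. apply nth_In. simpl. auto.
Qed.

Lemma part2 a x : 0 < a -> (conv (tetrakis a) x <->
     (in_cube (5*a/24) x \/
      exists F, In F (pyramids (5*a/24) (5*a/48)) /\ conv F x)).
Proof.
  intros ha. split.
  - intros H. destruct (H_split a x ha (conv_H a x ha H)) as [C|[k [Hk P]]]; [left; auto| right].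
    exists (nth k (pyramids (5*a/24) (5*a/48)) []). split; auto. apply nth_In. simpl; auto.
  - intros [C|[F [HF P]]]. apply cube_conv; auto. eapply pyr_in_tet; eauto.
Qed.


Definition arr3 {T : Type} (u1 u2 u3 A B C : T) : Prop :=
  (u1 = A /\ u2 = B /\ u3 = C) \/ (u1 = A /\ u2 = C /\ u3 = B) \/
  (u1 = B /\ u2 = A /\ u3 = C) \/ (u1 = B /\ u2 = C /\ u3 = A) \/
  (u1 = C /\ u2 = A /\ u3 = B) \/ (u1 = C /\ u2 = B /\ u3 = A).

Lemma perm3_intro {T : Type} (u1 u2 u3 A B C : T) : arr3 u1 u2 u3 A B C -> Permutation [u1;u2;u3] [A;B;C].
Proof.
  unfold arr3; intros [[-> [-> ->]]|[[-> [-> ->]]|[[-> [-> ->]]|[[-> [-> ->]]|[[-> [-> ->]]|[-> [-> ->]]]]]]].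
  - apply Permutation_refl.
  - apply perm_skip, perm_swap.
  - apply perm_swap.
  - eapply perm_trans; [apply perm_skip, perm_swap| apply perm_swap].
  - eapply perm_trans; [apply perm_swap| apply perm_skip, perm_swap].
  - eapply perm_trans; [apply perm_swap|]. eapply perm_trans; [apply perm_skip, perm_swap|]. apply perm_swap.
Qed.

Lemma perm3_elim {T : Type} (u1 u2 u3 A B C : T) : Permutation [u1;u2;u3] [A;B;C] -> arr3 u1 u2 u3 A B C.
Proof.
  intros P. assert (Hin : In u1 [A;B;C]) by (eapply Permutation_in; [exact P| left; auto]).
  unfold arr3. simpl in Hin. destruct Hin as [->|[->|[->|[]]]].
  - apply Permutation_cons_inv in P. apply Permutation_length_2_inv in P.
    destruct P as [P|P]; inversion P; subst; tauto.
  - assert (P' : Permutation [u1;u2;u3] [u1;A;C]) by (eapply perm_trans; [exact P| apply perm_swap]).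
    apply Permutation_cons_inv in P'. apply Permutation_sym, Permutation_length_2_inv in P'.
    destruct P' as [P'|P']; inversion P'; subst; tauto.
  - assert (P' : Permutation [u1;u2;u3] [u1;A;B]).
    { eapply perm_trans; [exact P|]. eapply perm_trans; [apply perm_skip, perm_swap|]. apply perm_swap. }
    apply Permutation_cons_inv in P'. apply Permutation_sym, Permutation_length_2_inv in P'.
    destruct P' as [P'|P']; inversion P'; subst; tauto.
Qed.

Lemma gap_abs a x u : 0 < a -> a*a*(u*u) - 2*x*(a*u) >= a*a*(Rabs u * Rabs u) - 2*a*Rabs x*Rabs u.
Proof.
  intros ha. assert (x*u <= Rabs x * Rabs u) by (rewrite <- Rabs_mult; apply Rle_abs).
  assert (Rabs u * Rabs u = u * u) by (rewrite <- Rabs_mult; apply Rabs_right; nra). nra.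
Qed.

Lemma gap_int a x n : 0 < a -> Rabs x <= a/2 -> a*a*(IZR n*IZR n) - 2*x*(a*IZR n) >= 0.
Proof.
  intros ha hx. pose proof (gap_abs a x (IZR n) ha). set (T := Rabs (IZR n)) in *.
  assert (T = 0 \/ T >= 1).
  { unfold T. destruct (Z.eq_dec n 0) as [->|Hn]. left; rewrite Rabs_R0; auto.
    right. rewrite <- abs_IZR. apply Rle_ge. apply IZR_le. lia. }
  assert (0 <= Rabs x) by apply Rabs_pos.
  destruct H0 as [-> | H0]; [nra|].
  assert (0 <= a * T * (a - 2 * Rabs x)) by (apply Rmult_le_pos; [apply Rmult_le_pos|]; lra).
  assert (0 <= a * a * T * (T - 1)) by (apply Rmult_le_pos; [apply Rmult_le_pos; [nra|]|]; lra).
  nra.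
Qed.

Lemma gap_half a x n : 0 < a -> Rabs x <= a/2 ->
  a*a*((IZR n + 1/2)*(IZR n + 1/2)) - 2*x*(a*(IZR n + 1/2)) >= a*a/4 - a*Rabs x.
Proof.
  intros ha hx. pose proof (gap_abs a x (IZR n + 1/2) ha). set (T := Rabs (IZR n + 1/2)) in *.
  assert (T >= 1/2).
  { unfold T. destruct (Z_lt_le_dec n 0) as [Hn|Hn].
    - apply IZR_lt in Hn. assert (IZR n <= -1) by (apply IZR_le; apply lt_IZR in Hn; lia).
      rewrite Rabs_left by lra. lra.
    - apply IZR_le in Hn. rewrite Rabs_right by lra. lra. }
  assert (0 <= Rabs x) by apply Rabs_pos.
  assert (0 <= (T - 1/2) * (a*a*(T+1/2) - 2*a*Rabs x)).
  { apply Rmult_le_pos; [lra|]. assert (a*a*(T+1/2) >= a * a) by nra. nra. }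
  nra.
Qed.

Lemma gap_quarter a x k eps : 0 < a -> Rabs x <= a/2 -> (eps = 1/4 \/ eps = 3/4) ->
  a*a*((IZR k + eps)*(IZR k + eps)) - 2*x*(a*(IZR k + eps)) >= a*a/16 - a*Rabs x/2.
Proof.
  intros ha hx He. pose proof (gap_abs a x (IZR k + eps) ha). set (T := Rabs (IZR k + eps)) in *.
  assert (T = 1/4 \/ T >= 3/4).
  { unfold T. destruct (Z_lt_le_dec k (-1)) as [Hn|Hn].
    - assert (IZR k <= -2) by (apply IZR_le; lia). rewrite Rabs_left by lra. right; lra.
    - destruct (Z.eq_dec k (-1)) as [->|Hk].
      + destruct He as [-> | ->]; [rewrite Rabs_left by lra; right; lra| rewrite Rabs_left by lra; left; lra].
      + destruct (Z.eq_dec k 0) as [->|Hk0].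
        * destruct He as [-> | ->]; [rewrite Rabs_right by lra; left; lra| rewrite Rabs_right by lra; right; lra].
        * assert (1 <= IZR k) by (apply IZR_le; lia). rewrite Rabs_right by lra. right; lra. }
  assert (0 <= Rabs x) by apply Rabs_pos.
  destruct H0 as [-> | H0]; [nra|].
  assert (0 <= (T - 3/4) * (a*a*(T+3/4) - 2*a*Rabs x)).
  { apply Rmult_le_pos; [lra|]. assert (a*a*(T+3/4) >= a * a) by nra. nra. }
  nra.
Qed.

Lemma vor_iff x1 x2 x3 a u1 u2 u3 :
  norm3 (psub (mkpt x1 x2 x3) origin) <= norm3 (psub (mkpt x1 x2 x3) (mkpt (a*u1) (a*u2) (a*u3))) <->
  0 <= (a*a*(u1*u1) - 2*x1*(a*u1)) + (a*a*(u2*u2) - 2*x2*(a*u2)) + (a*a*(u3*u3) - 2*x3*(a*u3)).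
Proof.
  unfold norm3, origin; ptsimpl. rewrite !Rmult_1_r.
  set (G := (a*a*(u1*u1) - 2*x1*(a*u1)) + (a*a*(u2*u2) - 2*x2*(a*u2)) + (a*a*(u3*u3) - 2*x3*(a*u3))).
  match goal with |- sqrt ?A <= sqrt ?B <-> _ =>
    assert (E : B = A + G) by (unfold G; ring);
    assert (HB : 0 <= B) by (repeat apply Rplus_le_le_0_compat; apply Rle_0_sqr); rewrite E in HB |- *;
    assert (HA : 0 <= A) by (repeat apply Rplus_le_le_0_compat; apply Rle_0_sqr) end.
  split; intro H.
  - apply sqrt_le_0 in H; lra.
  - apply sqrt_le_1_alt. lra.
Qed.

Lemma Hc_bounds a x1 x2 x3 : Hc a (mkpt x1 x2 x3) ->
  Rabs x1 <= a/2 /\ Rabs x2 <= a/2 /\ Rabs x3 <= a/2 /\ Rabs x1 + Rabs x2 + Rabs x3 <= 3*a/4.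
Proof.
  unfold Hc; ptsimpl. pose proof (Rabs_pos x1); pose proof (Rabs_pos x2); pose proof (Rabs_pos x3).
  intros; lra.
Qed.

Lemma H_vor a x : 0 < a -> Hc a x -> voronoi (L2 a) origin x.
Proof.
  intros ha Hx q Hq. destruct x as [[x1 x2] x3].
  destruct (Hc_bounds a x1 x2 x3 Hx) as [B1 [B2 [B3 B4]]].
  destruct Hq as [[i [j [k ->]]]|[[i [j [k ->]]]|[i [j [k [eps [u1 [u2 [u3 [He [P ->]]]]]]]]]]].
  - apply vor_iff.
    pose proof (gap_int a x1 i ha B1); pose proof (gap_int a x2 j ha B2); pose proof (gap_int a x3 k ha B3). lra.
  - apply vor_iff.
    pose proof (gap_half a x1 i ha B1); pose proof (gap_half a x2 j ha B2); pose proof (gap_half a x3 k ha B3).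
    assert (0 <= a * (3*a/4 - (Rabs x1 + Rabs x2 + Rabs x3))) by (apply Rmult_le_pos; lra). lra.
  - apply vor_iff. unfold Hc in Hx; ptsimpl.
    apply perm3_elim in P. unfold arr3 in P.
    destruct P as [[-> [-> ->]]|[[-> [-> ->]]|[[-> [-> ->]]|[[-> [-> ->]]|[[-> [-> ->]]|[-> [-> ->]]]]]]].
    + pose proof (gap_int a x1 i ha B1); pose proof (gap_half a x2 j ha B2); pose proof (gap_quarter a x3 k eps ha B3 He).  assert (0 <= a * (5*a/8 - (2*Rabs x2 + Rabs x3))) by (apply Rmult_le_pos; lra). lra.
    + pose proof (gap_int a x1 i ha B1); pose proof (gap_half a x3 j ha B3); pose proof (gap_quarter a x2 k eps ha B2 He).  assert (0 <= a * (5*a/8 - (2*Rabs x3 + Rabs x2))) by (apply Rmult_le_pos; lra). lra.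
    + pose proof (gap_int a x2 i ha B2); pose proof (gap_half a x1 j ha B1); pose proof (gap_quarter a x3 k eps ha B3 He).  assert (0 <= a * (5*a/8 - (2*Rabs x1 + Rabs x3))) by (apply Rmult_le_pos; lra). lra.
    + pose proof (gap_int a x3 i ha B3); pose proof (gap_half a x1 j ha B1); pose proof (gap_quarter a x2 k eps ha B2 He).  assert (0 <= a * (5*a/8 - (2*Rabs x1 + Rabs x2))) by (apply Rmult_le_pos; lra). lra.
    + pose proof (gap_int a x2 i ha B2); pose proof (gap_half a x3 j ha B3); pose proof (gap_quarter a x1 k eps ha B1 He).  assert (0 <= a * (5*a/8 - (2*Rabs x3 + Rabs x1))) by (apply Rmult_le_pos; lra). lra.
    + pose proof (gap_int a x3 i ha B3); pose proof (gap_half a x2 j ha B2); pose proof (gap_quarter a x1 k eps ha B1 He).  assert (0 <= a * (5*a/8 - (2*Rabs x2 + Rabs x1))) by (apply Rmult_le_pos; lra). lra.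
Qed.

Lemma W_in a u1 u2 u3 s1 s2 : (s1 = 1/2 \/ s1 = -1/2) -> (s2 = 1/4 \/ s2 = -1/4) ->
  arr3 u1 u2 u3 0 s1 s2 -> L2 a (mkpt (a*u1) (a*u2) (a*u3)).
Proof.
  intros H1 H2 Ha. right; right.
  destruct H1 as [E1|E1]; destruct H2 as [E2|E2].
  - exists 0%Z, 0%Z, 0%Z, (1/4), u1, u2, u3. split; [left; auto|]. split; auto.
    apply perm3_intro. rewrite E1, E2 in Ha. unfold arr3 in *.
    destruct Ha as [[-> [-> ->]]|[[-> [-> ->]]|[[-> [-> ->]]|[[-> [-> ->]]|[[-> [-> ->]]|[-> [-> ->]]]]]]];
    repeat (first [left; repeat split; lra | right]); repeat split; lra.
  - exists 0%Z, 0%Z, (-1)%Z, (3/4), u1, u2, u3. split; [right; auto|]. split; auto.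
    apply perm3_intro. rewrite E1, E2 in Ha. unfold arr3 in *.
    destruct Ha as [[-> [-> ->]]|[[-> [-> ->]]|[[-> [-> ->]]|[[-> [-> ->]]|[[-> [-> ->]]|[-> [-> ->]]]]]]];
    repeat (first [left; repeat split; lra | right]); repeat split; lra.
  - exists 0%Z, (-1)%Z, 0%Z, (1/4), u1, u2, u3. split; [left; auto|]. split; auto.
    apply perm3_intro. rewrite E1, E2 in Ha. unfold arr3 in *.
    destruct Ha as [[-> [-> ->]]|[[-> [-> ->]]|[[-> [-> ->]]|[[-> [-> ->]]|[[-> [-> ->]]|[-> [-> ->]]]]]]];
    repeat (first [left; repeat split; lra | right]); repeat split; lra.
  - exists 0%Z, (-1)%Z, (-1)%Z, (3/4), u1, u2, u3. split; [right; auto|]. split; auto.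
    apply perm3_intro. rewrite E1, E2 in Ha. unfold arr3 in *.
    destruct Ha as [[-> [-> ->]]|[[-> [-> ->]]|[[-> [-> ->]]|[[-> [-> ->]]|[[-> [-> ->]]|[-> [-> ->]]]]]]];
    repeat (first [left; repeat split; lra | right]); repeat split; lra.
Qed.

Ltac arrt := unfold arr3; repeat (first [left; repeat split; lra | right]); repeat split; lra.

Lemma lin_from_gap a x1 x2 x3 u1 u2 u3 : 0 < a ->
  0 <= (a*a*(u1*u1) - 2*x1*(a*u1)) + (a*a*(u2*u2) - 2*x2*(a*u2)) + (a*a*(u3*u3) - 2*x3*(a*u3)) ->
  u1*u1 + u2*u2 + u3*u3 = 5/16 -> x1*u1 + x2*u2 + x3*u3 <= 5*a/32.
Proof.
  intros ha H E.
  assert (E2 : (a*a*(u1*u1) - 2*x1*(a*u1)) + (a*a*(u2*u2) - 2*x2*(a*u2)) + (a*a*(u3*u3) - 2*x3*(a*u3))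
     = 2 * a * (5*a/32 - (x1*u1 + x2*u2 + x3*u3))) by
    (replace (5*a/32) with (a * (u1*u1 + u2*u2 + u3*u3) / 2) by (rewrite E; field); field).
  rewrite E2 in H. destruct (Rle_dec (x1*u1 + x2*u2 + x3*u3) (5*a/32)); auto.
  assert (0 < 2 * a * (x1*u1 + x2*u2 + x3*u3 - 5*a/32)) by (apply Rmult_lt_0_compat; lra). lra.
Qed.

Lemma vor_H a x : 0 < a -> voronoi (L2 a) origin x -> Hc a x.
Proof.
  intros ha Hv. destruct x as [[x1 x2] x3].
  assert (G : forall u1 u2 u3 s1 s2, (s1 = 1/2 \/ s1 = -1/2) -> (s2 = 1/4 \/ s2 = -1/4) ->
     arr3 u1 u2 u3 0 s1 s2 ->
     0 <= (a*a*(u1*u1) - 2*x1*(a*u1)) + (a*a*(u2*u2) - 2*x2*(a*u2)) + (a*a*(u3*u3) - 2*x3*(a*u3))).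
  { intros u1 u2 u3 s1 s2 H1 H2 Ha. apply vor_iff. apply Hv. eapply W_in; eauto. }
  unfold Hc; ptsimpl; repeat split; apply abs_pair.
  - pose proof (G (1/2) (1/4) 0 (1/2) (1/4) ltac:(lra) ltac:(lra) ltac:(arrt)) as GG; apply lin_from_gap in GG; [lra|lra|lra].
  - pose proof (G (1/2) (-1/4) 0 (1/2) (-1/4) ltac:(lra) ltac:(lra) ltac:(arrt)) as GG; apply lin_from_gap in GG; [lra|lra|lra].
  - pose proof (G (-1/2) (1/4) 0 (-1/2) (1/4) ltac:(lra) ltac:(lra) ltac:(arrt)) as GG; apply lin_from_gap in GG; [lra|lra|lra].
  - pose proof (G (-1/2) (-1/4) 0 (-1/2) (-1/4) ltac:(lra) ltac:(lra) ltac:(arrt)) as GG; apply lin_from_gap in GG; [lra|lra|lra].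
  - pose proof (G (1/2) 0 (1/4) (1/2) (1/4) ltac:(lra) ltac:(lra) ltac:(arrt)) as GG; apply lin_from_gap in GG; [lra|lra|lra].
  - pose proof (G (1/2) 0 (-1/4) (1/2) (-1/4) ltac:(lra) ltac:(lra) ltac:(arrt)) as GG; apply lin_from_gap in GG; [lra|lra|lra].
  - pose proof (G (-1/2) 0 (1/4) (-1/2) (1/4) ltac:(lra) ltac:(lra) ltac:(arrt)) as GG; apply lin_from_gap in GG; [lra|lra|lra].
  - pose proof (G (-1/2) 0 (-1/4) (-1/2) (-1/4) ltac:(lra) ltac:(lra) ltac:(arrt)) as GG; apply lin_from_gap in GG; [lra|lra|lra].
  - pose proof (G (1/4) (1/2) 0 (1/2) (1/4) ltac:(lra) ltac:(lra) ltac:(arrt)) as GG; apply lin_from_gap in GG; [lra|lra|lra].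
  - pose proof (G (-1/4) (1/2) 0 (1/2) (-1/4) ltac:(lra) ltac:(lra) ltac:(arrt)) as GG; apply lin_from_gap in GG; [lra|lra|lra].
  - pose proof (G (1/4) (-1/2) 0 (-1/2) (1/4) ltac:(lra) ltac:(lra) ltac:(arrt)) as GG; apply lin_from_gap in GG; [lra|lra|lra].
  - pose proof (G (-1/4) (-1/2) 0 (-1/2) (-1/4) ltac:(lra) ltac:(lra) ltac:(arrt)) as GG; apply lin_from_gap in GG; [lra|lra|lra].
  - pose proof (G 0 (1/2) (1/4) (1/2) (1/4) ltac:(lra) ltac:(lra) ltac:(arrt)) as GG; apply lin_from_gap in GG; [lra|lra|lra].
  - pose proof (G 0 (1/2) (-1/4) (1/2) (-1/4) ltac:(lra) ltac:(lra) ltac:(arrt)) as GG; apply lin_from_gap in GG; [lra|lra|lra].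
  - pose proof (G 0 (-1/2) (1/4) (-1/2) (1/4) ltac:(lra) ltac:(lra) ltac:(arrt)) as GG; apply lin_from_gap in GG; [lra|lra|lra].
  - pose proof (G 0 (-1/2) (-1/4) (-1/2) (-1/4) ltac:(lra) ltac:(lra) ltac:(arrt)) as GG; apply lin_from_gap in GG; [lra|lra|lra].
  - pose proof (G (1/4) 0 (1/2) (1/2) (1/4) ltac:(lra) ltac:(lra) ltac:(arrt)) as GG; apply lin_from_gap in GG; [lra|lra|lra].
  - pose proof (G (-1/4) 0 (1/2) (1/2) (-1/4) ltac:(lra) ltac:(lra) ltac:(arrt)) as GG; apply lin_from_gap in GG; [lra|lra|lra].
  - pose proof (G (1/4) 0 (-1/2) (-1/2) (1/4) ltac:(lra) ltac:(lra) ltac:(arrt)) as GG; apply lin_from_gap in GG; [lra|lra|lra].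
  - pose proof (G (-1/4) 0 (-1/2) (-1/2) (-1/4) ltac:(lra) ltac:(lra) ltac:(arrt)) as GG; apply lin_from_gap in GG; [lra|lra|lra].
  - pose proof (G 0 (1/4) (1/2) (1/2) (1/4) ltac:(lra) ltac:(lra) ltac:(arrt)) as GG; apply lin_from_gap in GG; [lra|lra|lra].
  - pose proof (G 0 (-1/4) (1/2) (1/2) (-1/4) ltac:(lra) ltac:(lra) ltac:(arrt)) as GG; apply lin_from_gap in GG; [lra|lra|lra].
  - pose proof (G 0 (1/4) (-1/2) (-1/2) (1/4) ltac:(lra) ltac:(lra) ltac:(arrt)) as GG; apply lin_from_gap in GG; [lra|lra|lra].
  - pose proof (G 0 (-1/4) (-1/2) (-1/2) (-1/4) ltac:(lra) ltac:(lra) ltac:(arrt)) as GG; apply lin_from_gap in GG; [lra|lra|lra].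
Qed.

Lemma part1 a x : 0 < a -> (voronoi (L2 a) origin x <-> conv (tetrakis a) x).
Proof.
  intros ha; split; intro H.
  - apply H_conv; auto. apply vor_H; auto.
  - apply H_vor; auto. apply conv_H; auto.
Qed.


Ltac arrt2 := unfold arr3; rewrite ?plus_IZR; repeat (first [left; repeat split; lra | right]); repeat split; lra.

Lemma L2_shift a p q : (inZ3 a p \/ inZh3 a p) -> L2 a q -> L2 a (padd q p).
Proof.
  intros Hp Hq.
  destruct Hp as [[n1 [n2 [n3 ->]]] | [n1 [n2 [n3 ->]]]];
  destruct Hq as [[i[j[k ->]]] | [[i[j[k ->]]] | [i [j [k [eps [u1 [u2 [u3 [He [P ->]]]]]]]]]]].
  - left. exists (i+n1)%Z, (j+n2)%Z, (k+n3)%Z. apply pt_eq; ptsimpl; rewrite !plus_IZR; ring.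
  - right; left. exists (i+n1)%Z, (j+n2)%Z, (k+n3)%Z. apply pt_eq; ptsimpl; rewrite !plus_IZR; ring.
  - apply perm3_elim in P. unfold arr3 in P.
    destruct P as [[-> [-> ->]]|[[-> [-> ->]]|[[-> [-> ->]]|[[-> [-> ->]]|[[-> [-> ->]]|[-> [-> ->]]]]]]].
    + right; right. exists (i+n1)%Z, (j+n2)%Z, (k+n3)%Z, eps, (IZR i + IZR n1), ((IZR j + 1/2) + IZR n2), ((IZR k + eps) + IZR n3). split; auto. split.
      * apply perm3_intro. arrt2.
      * apply pt_eq; ptsimpl; ring.
    + right; right. exists (i+n1)%Z, (j+n3)%Z, (k+n2)%Z, eps, (IZR i + IZR n1), ((IZR k + eps) + IZR n2), ((IZR j + 1/2) + IZR n3). split; auto. split.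
      * apply perm3_intro. arrt2.
      * apply pt_eq; ptsimpl; ring.
    + right; right. exists (i+n2)%Z, (j+n1)%Z, (k+n3)%Z, eps, ((IZR j + 1/2) + IZR n1), (IZR i + IZR n2), ((IZR k + eps) + IZR n3). split; auto. split.
      * apply perm3_intro. arrt2.
      * apply pt_eq; ptsimpl; ring.
    + right; right. exists (i+n3)%Z, (j+n1)%Z, (k+n2)%Z, eps, ((IZR j + 1/2) + IZR n1), ((IZR k + eps) + IZR n2), (IZR i + IZR n3). split; auto. split.
      * apply perm3_intro. arrt2.
      * apply pt_eq; ptsimpl; ring.
    + right; right. exists (i+n2)%Z, (j+n3)%Z, (k+n1)%Z, eps, ((IZR k + eps) + IZR n1), (IZR i + IZR n2), ((IZR j + 1/2) + IZR n3). split; auto. split.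
      * apply perm3_intro. arrt2.
      * apply pt_eq; ptsimpl; ring.
    + right; right. exists (i+n3)%Z, (j+n2)%Z, (k+n1)%Z, eps, ((IZR k + eps) + IZR n1), ((IZR j + 1/2) + IZR n2), (IZR i + IZR n3). split; auto. split.
      * apply perm3_intro. arrt2.
      * apply pt_eq; ptsimpl; ring.
  - right; left. exists (i+n1)%Z, (j+n2)%Z, (k+n3)%Z. apply pt_eq; ptsimpl; rewrite !plus_IZR; ring.
  - left. exists (i+n1+1)%Z, (j+n2+1)%Z, (k+n3+1)%Z. apply pt_eq; ptsimpl; rewrite !plus_IZR; lra.
  - apply perm3_elim in P. unfold arr3 in P.
    destruct P as [[-> [-> ->]]|[[-> [-> ->]]|[[-> [-> ->]]|[[-> [-> ->]]|[[-> [-> ->]]|[-> [-> ->]]]]]]].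
    + destruct He as [He|He]; subst eps.
      * right; right. exists (j+n2+1)%Z, (i+n1)%Z, (k+n3)%Z, (3/4), (IZR i + (IZR n1 + 1/2)), ((IZR j + 1/2) + (IZR n2 + 1/2)), ((IZR k + (1/4)) + (IZR n3 + 1/2)). split; [right; auto|]. split.
        -- apply perm3_intro. arrt2.
        -- apply pt_eq; ptsimpl; ring.
      * right; right. exists (j+n2+1)%Z, (i+n1)%Z, (k+n3+1)%Z, (1/4), (IZR i + (IZR n1 + 1/2)), ((IZR j + 1/2) + (IZR n2 + 1/2)), ((IZR k + (3/4)) + (IZR n3 + 1/2)). split; [left; auto|]. split.
        -- apply perm3_intro. arrt2.
        -- apply pt_eq; ptsimpl; ring.
    + destruct He as [He|He]; subst eps.
      * right; right. exists (j+n3+1)%Z, (i+n1)%Z, (k+n2)%Z, (3/4), (IZR i + (IZR n1 + 1/2)), ((IZR k + (1/4)) + (IZR n2 + 1/2)), ((IZR j + 1/2) + (IZR n3 + 1/2)). split; [right; auto|]. split.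
        -- apply perm3_intro. arrt2.
        -- apply pt_eq; ptsimpl; ring.
      * right; right. exists (j+n3+1)%Z, (i+n1)%Z, (k+n2+1)%Z, (1/4), (IZR i + (IZR n1 + 1/2)), ((IZR k + (3/4)) + (IZR n2 + 1/2)), ((IZR j + 1/2) + (IZR n3 + 1/2)). split; [left; auto|]. split.
        -- apply perm3_intro. arrt2.
        -- apply pt_eq; ptsimpl; ring.
    + destruct He as [He|He]; subst eps.
      * right; right. exists (j+n1+1)%Z, (i+n2)%Z, (k+n3)%Z, (3/4), ((IZR j + 1/2) + (IZR n1 + 1/2)), (IZR i + (IZR n2 + 1/2)), ((IZR k + (1/4)) + (IZR n3 + 1/2)). split; [right; auto|]. split.
        -- apply perm3_intro. arrt2.
        -- apply pt_eq; ptsimpl; ring.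
      * right; right. exists (j+n1+1)%Z, (i+n2)%Z, (k+n3+1)%Z, (1/4), ((IZR j + 1/2) + (IZR n1 + 1/2)), (IZR i + (IZR n2 + 1/2)), ((IZR k + (3/4)) + (IZR n3 + 1/2)). split; [left; auto|]. split.
        -- apply perm3_intro. arrt2.
        -- apply pt_eq; ptsimpl; ring.
    + destruct He as [He|He]; subst eps.
      * right; right. exists (j+n1+1)%Z, (i+n3)%Z, (k+n2)%Z, (3/4), ((IZR j + 1/2) + (IZR n1 + 1/2)), ((IZR k + (1/4)) + (IZR n2 + 1/2)), (IZR i + (IZR n3 + 1/2)). split; [right; auto|]. split.
        -- apply perm3_intro. arrt2.
        -- apply pt_eq; ptsimpl; ring.
      * right; right. exists (j+n1+1)%Z, (i+n3)%Z, (k+n2+1)%Z, (1/4), ((IZR j + 1/2) + (IZR n1 + 1/2)), ((IZR k + (3/4)) + (IZR n2 + 1/2)), (IZR i + (IZR n3 + 1/2)). split; [left; auto|]. split.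
        -- apply perm3_intro. arrt2.
        -- apply pt_eq; ptsimpl; ring.
    + destruct He as [He|He]; subst eps.
      * right; right. exists (j+n3+1)%Z, (i+n2)%Z, (k+n1)%Z, (3/4), ((IZR k + (1/4)) + (IZR n1 + 1/2)), (IZR i + (IZR n2 + 1/2)), ((IZR j + 1/2) + (IZR n3 + 1/2)). split; [right; auto|]. split.
        -- apply perm3_intro. arrt2.
        -- apply pt_eq; ptsimpl; ring.
      * right; right. exists (j+n3+1)%Z, (i+n2)%Z, (k+n1+1)%Z, (1/4), ((IZR k + (3/4)) + (IZR n1 + 1/2)), (IZR i + (IZR n2 + 1/2)), ((IZR j + 1/2) + (IZR n3 + 1/2)). split; [left; auto|]. split.
        -- apply perm3_intro. arrt2.
        -- apply pt_eq; ptsimpl; ring.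
    + destruct He as [He|He]; subst eps.
      * right; right. exists (j+n2+1)%Z, (i+n3)%Z, (k+n1)%Z, (3/4), ((IZR k + (1/4)) + (IZR n1 + 1/2)), ((IZR j + 1/2) + (IZR n2 + 1/2)), (IZR i + (IZR n3 + 1/2)). split; [right; auto|]. split.
        -- apply perm3_intro. arrt2.
        -- apply pt_eq; ptsimpl; ring.
      * right; right. exists (j+n2+1)%Z, (i+n3)%Z, (k+n1+1)%Z, (1/4), ((IZR k + (3/4)) + (IZR n1 + 1/2)), ((IZR j + 1/2) + (IZR n2 + 1/2)), (IZR i + (IZR n3 + 1/2)). split; [left; auto|]. split.
        -- apply perm3_intro. arrt2.
        -- apply pt_eq; ptsimpl; ring.
Qed.

Lemma neg_in a p : (inZ3 a p \/ inZh3 a p) -> (inZ3 a (pscale (-1) p) \/ inZh3 a (pscale (-1) p)).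
Proof.
  intros [[n1 [n2 [n3 ->]]] | [n1 [n2 [n3 ->]]]].
  - left. exists (-n1)%Z, (-n2)%Z, (-n3)%Z. apply pt_eq; ptsimpl; rewrite !opp_IZR; ring.
  - right. exists (-n1-1)%Z, (-n2-1)%Z, (-n3-1)%Z. apply pt_eq; ptsimpl; rewrite !minus_IZR, !opp_IZR; lra.
Qed.

Lemma norm3_eq p q : px p = px q -> py p = py q -> pz p = pz q -> norm3 p = norm3 q.
Proof. intros; unfold norm3; congruence. Qed.

Lemma part4 a p : 0 < a -> inZ3 a p \/ inZh3 a p ->
  forall x : pt, voronoi (L2 a) p x <-> conv (tetrakis a) (psub x p).
Proof.
  intros ha Hp x. rewrite <- part1 by auto. split; intros H q Hq.
  - assert (Hq' : L2 a (padd q p)) by (apply L2_shift; auto).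
    specialize (H _ Hq').
    replace (norm3 (psub (psub x p) origin)) with (norm3 (psub x p)) by (apply norm3_eq; ptsimpl; ring).
    replace (norm3 (psub (psub x p) q)) with (norm3 (psub x (padd q p))) by (apply norm3_eq; ptsimpl; ring).
    auto.
  - assert (Hq' : L2 a (padd q (pscale (-1) p))) by (apply L2_shift; auto; apply neg_in; auto).
    specialize (H _ Hq').
    replace (norm3 (psub x p)) with (norm3 (psub (psub x p) origin)) by (apply norm3_eq; ptsimpl; ring).
    replace (norm3 (psub x q)) with (norm3 (psub (psub x p) (padd q (pscale (-1) p)))) by (apply norm3_eq; ptsimpl; ring).
    auto.
Qed.


Lemma sumR_app l1 l2 : sumR (l1 ++ l2) = sumR l1 + sumR l2.
Proof. induction l1; simpl; [ring| rewrite IHl1; ring]. Qed.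

Lemma sum_ext {T} (f g : T -> R) l : (forall x, In x l -> f x = g x) -> sumR (map f l) = sumR (map g l).
Proof. intros H. f_equal. apply map_ext_in. auto. Qed.

Lemma sum_add {T} (f g : T -> R) l : sumR (map (fun x => f x + g x) l) = sumR (map f l) + sumR (map g l).
Proof. induction l; simpl; [ring| rewrite IHl; ring]. Qed.

Lemma sum_scal {T} (c : R) (f : T -> R) l : sumR (map (fun x => c * f x) l) = c * sumR (map f l).
Proof. induction l; simpl; [ring| rewrite IHl; ring]. Qed.

Lemma sum_opp {T} (f : T -> R) l : sumR (map (fun x => - f x) l) = - sumR (map f l).
Proof. induction l; simpl; [ring| rewrite IHl; ring]. Qed.

Lemma sum_le {T} (f g : T -> R) l : (forall x, In x l -> f x <= g x) -> sumR (map f l) <= sumR (map g l).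
Proof. induction l; simpl; intros H; [lra|]. pose proof (H a (or_introl eq_refl)).
  pose proof (IHl (fun x Hx => H x (or_intror Hx))). lra. Qed.

Lemma sum_swap {A B} (f : A -> B -> R) l1 l2 :
  sumR (map (fun i => sumR (map (fun j => f i j) l2)) l1) = sumR (map (fun j => sumR (map (fun i => f i j) l1)) l2).
Proof.
  induction l1 as [|x l1 IH]; simpl.
  - induction l2; simpl; auto. rewrite <- IHl2; ring.
  - rewrite IH. rewrite <- sum_add. reflexivity.
Qed.

Lemma sumR_perm l l' : Permutation l l' -> sumR l = sumR l'.
Proof. induction 1; simpl; try lra. Qed.

Lemma in_zrange m i : In i (zrange m) <-> (- Z.of_nat m <= i <= Z.of_nat m)%Z.
Proof.
  unfold zrange. rewrite in_map_iff. split.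
  - intros [k [<- Hk]]. apply in_seq in Hk. lia.
  - intros H. exists (Z.to_nat (i + Z.of_nat m)). split; [lia|]. apply in_seq. lia.
Qed.

Lemma zrange_nodup m : NoDup (zrange m).
Proof.
  unfold zrange. apply FinFun.Injective_map_NoDup; [intros x y; lia| apply seq_NoDup].
Qed.

Lemma sum_neg (f : Z -> R) m : sumR (map f (zrange m)) = sumR (map (fun i => f (- i)%Z) (zrange m)).
Proof.
  rewrite <- (map_map Z.opp f). apply sumR_perm. apply Permutation_map.
  apply NoDup_Permutation.
  - apply zrange_nodup.
  - apply FinFun.Injective_map_NoDup; [intros x y; lia| apply zrange_nodup].
  - intros x. rewrite in_map_iff, in_zrange. split.
    + intros H. exists (- x)%Z. rewrite in_zrange. lia.
    + intros [y [<- Hy]]. rewrite in_zrange in Hy. lia.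
Qed.

Lemma tele_seq (Phi : Z -> R) m s n :
  sumR (map (fun k => Phi (Z.of_nat k - m)%Z - Phi (Z.of_nat k - m - 1)%Z) (seq s n)) =
  Phi (Z.of_nat (s + n) - m - 1)%Z - Phi (Z.of_nat s - m - 1)%Z.
Proof.
  induction n as [|n IH].
  - simpl. rewrite Nat.add_0_r. ring.
  - rewrite seq_S, map_app, sumR_app, IH. simpl.
    replace (Z.of_nat (s + S n) - m - 1)%Z with (Z.of_nat (s + n) - m)%Z by lia. ring.
Qed.

Lemma tele_zrange (Phi : Z -> R) M :
  sumR (map (fun i => Phi i - Phi (i - 1)%Z) (zrange M)) = Phi (Z.of_nat M) - Phi (- Z.of_nat M - 1)%Z.
Proof.
  unfold zrange. rewrite map_map. rewrite (tele_seq Phi (Z.of_nat M) 0 (2 * M + 1)).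
  f_equal; f_equal; lia.
Qed.

Lemma window_le (f G : Z -> R) p q M :
  (- Z.of_nat M <= p)%Z -> (q <= Z.of_nat M)%Z -> (p - 1 <= q)%Z ->
  (forall i, (p <= i <= q)%Z -> f i <= G i - G (i - 1)%Z) ->
  (forall i, ~ (p <= i <= q)%Z -> f i <= 0) ->
  sumR (map f (zrange M)) <= G q - G (p - 1)%Z.
Proof.
  intros H1 H2 H3 Hin Hout.
  set (Phi := fun i => G (Z.max (p - 1) (Z.min i q))).
  apply Rle_trans with (sumR (map (fun i => Phi i - Phi (i - 1)%Z) (zrange M))).
  - apply sum_le. intros i _. unfold Phi.
    destruct (Z_le_dec p i); destruct (Z_le_dec i q).
    + replace (Z.max (p - 1) (Z.min i q)) with i by lia.
      replace (Z.max (p - 1) (Z.min (i - 1) q)) with (i - 1)%Z by lia. apply Hin; lia.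
    + replace (Z.max (p - 1) (Z.min i q)) with q by lia.
      replace (Z.max (p - 1) (Z.min (i - 1) q)) with q by lia. pose proof (Hout i ltac:(lia)). lra.
    + replace (Z.max (p - 1) (Z.min i q)) with (p - 1)%Z by lia.
      replace (Z.max (p - 1) (Z.min (i - 1) q)) with (p - 1)%Z by lia. pose proof (Hout i ltac:(lia)). lra.
    + lia.
  - rewrite tele_zrange. unfold Phi.
    replace (Z.max (p - 1) (Z.min (Z.of_nat M) q)) with q by lia.
    replace (Z.max (p - 1) (Z.min (- Z.of_nat M - 1) q)) with (p - 1)%Z by lia. lra.
Qed.

Lemma window_ge (f G : Z -> R) p q M :
  (- Z.of_nat M <= p)%Z -> (q <= Z.of_nat M)%Z -> (p - 1 <= q)%Z ->
  (forall i, (p <= i <= q)%Z -> G i - G (i - 1)%Z <= f i) ->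
  (forall i, ~ (p <= i <= q)%Z -> 0 <= f i) ->
  G q - G (p - 1)%Z <= sumR (map f (zrange M)).
Proof.
  intros H1 H2 H3 Hin Hout.
  pose proof (window_le (fun i => - f i) (fun i => - G i) p q M H1 H2 H3) as W.
  assert (E : sumR (map (fun i => - f i) (zrange M)) = - sumR (map f (zrange M))).
  { apply sum_opp. }
  rewrite E in W. cut (- sumR (map f (zrange M)) <= - G q - - G (p - 1)%Z). lra.
  apply W.
  - intros i Hi. pose proof (Hin i Hi). lra.
  - intros i Hi. pose proof (Hout i Hi). lra.
Qed.

Lemma up_spec x : x < IZR (up x) /\ IZR (up x) <= x + 1.
Proof. destruct (archimed x). lra. Qed.

Lemma int_le x i : IZR i <= x <-> (i <= up x - 1)%Z.
Proof.
  destruct (up_spec x). split; intro H1.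
  - assert (i < up x)%Z by (apply lt_IZR; lra). lia.
  - apply IZR_le in H1. rewrite minus_IZR in H1. simpl in H1. lra.
Qed.

Lemma int_gt x i : x < IZR i <-> (up x <= i)%Z.
Proof.
  destruct (up_spec x). split; intro H1.
  - destruct (Z_le_dec (up x) i); auto. assert (i <= up x - 1)%Z by lia.
    apply IZR_le in H2. rewrite minus_IZR in H2. simpl in H2. lra.
  - apply IZR_le in H1. lra.
Qed.

Definition indic_def P : indic P = if excluded_middle_informative P then 1 else 0 := eq_refl.

Lemma indic_iff P Q : (P <-> Q) -> indic P = indic Q.
Proof. intros H. unfold indic. destruct (excluded_middle_informative P), (excluded_middle_informative Q); tauto. Qed.

Lemma indic_and P Q : indic (P /\ Q) = indic P * indic Q.
Proof. unfold indic. destruct (excluded_middle_informative P), (excluded_middle_informative Q),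
  (excluded_middle_informative (P /\ Q)); try tauto; ring. Qed.

Lemma indic_or P Q : ~ (P /\ Q) -> indic (P \/ Q) = indic P + indic Q.
Proof. intros H. unfold indic. destruct (excluded_middle_informative P), (excluded_middle_informative Q),
  (excluded_middle_informative (P \/ Q)); try tauto; ring. Qed.

Lemma indic_T (P : Prop) : P -> indic P = 1.
Proof. intros. unfold indic. destruct (excluded_middle_informative P); tauto. Qed.
Lemma indic_F (P : Prop) : ~ P -> indic P = 0.
Proof. intros. unfold indic. destruct (excluded_middle_informative P); tauto. Qed.
Lemma indic_01 P : 0 <= indic P <= 1.
Proof. unfold indic. destruct (excluded_middle_informative P); lra. Qed.

Definition cnt (N r : R) (M : nat) : R :=
  sumR (map (fun j => indic (- r <= IZR j / N <= r)) (zrange M)).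

Lemma cnt_val N r M : 0 < N -> 0 <= r -> N * r <= INR M ->
  cnt N r M = 2 * IZR (up (N * r)) - 1.
Proof.
  intros hN hr hM. destruct (up_spec (N*r)) as [U1 U2].
  assert (Hw : forall j, (- r <= IZR j / N <= r) <-> (1 - up (N*r) <= j <= up (N*r) - 1)%Z).
  { intros j. split.
    - intros [H1 H2].
      assert (IZR j <= N * r). { apply (Rmult_le_compat_l N) in H2; [|lra]. field_simplify in H2; lra. }
      assert (IZR (- j) <= N * r). { rewrite opp_IZR. apply (Rmult_le_compat_l N) in H1; [|lra].
         field_simplify in H1; lra. }
      apply int_le in H. apply int_le in H0. lia.
    - intros Hj. assert (A1 : (j <= up (N*r) - 1)%Z) by lia. assert (A2 : (- j <= up (N*r) - 1)%Z) by lia.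
      apply int_le in A1. apply int_le in A2. rewrite opp_IZR in A2.
      split.
      + apply (Rmult_le_reg_l N); [lra|]. field_simplify; lra.
      + apply (Rmult_le_reg_l N); [lra|]. field_simplify; lra. }
  assert (hM' : IZR (up (N * r)) <= INR M + 1) by lra.
  rewrite INR_IZR_INZ in hM'.
  assert (hb : (up (N * r) <= Z.of_nat M + 1)%Z) by (apply le_IZR; rewrite plus_IZR; simpl; lra).
  assert (hpos : (1 <= up (N*r))%Z) by (cut (0 < up (N*r))%Z; [lia| apply lt_IZR; simpl; nra]).
  apply Rle_antisym.
  - unfold cnt. eapply Rle_trans.
    apply (window_le _ (fun i => IZR i) (1 - up (N*r)) (up (N*r) - 1) M); try lia.
    + intros i Hi. rewrite indic_T by (apply Hw; auto). rewrite minus_IZR; simpl; lra.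
    + intros i Hi. rewrite indic_F by (rewrite Hw; auto). lra.
    + rewrite !minus_IZR. simpl. lra.
  - unfold cnt. eapply Rle_trans; [|
    apply (window_ge _ (fun i => IZR i) (1 - up (N*r)) (up (N*r) - 1) M); try lia].
    + rewrite !minus_IZR. simpl. lra.
    + intros i Hi. rewrite indic_T by (apply Hw; auto). rewrite minus_IZR; simpl; lra.
    + intros i Hi. rewrite indic_F by (rewrite Hw; auto). lra.
Qed.


Definition Pp (a x y z : R) : Prop :=
  5*a/24 < x <= 5*a/16 /\ (- (2*(5*a/16 - x)) <= y <= 2*(5*a/16 - x)) /\
  (- (2*(5*a/16 - x)) <= z <= 2*(5*a/16 - x)).
Definition Cb (a x y z : R) : Prop :=
  (- (5*a/24) <= x <= 5*a/24) /\ (- (5*a/24) <= y <= 5*a/24) /\ (- (5*a/24) <= z <= 5*a/24).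

Lemma Hc_union a x y z : 0 < a -> (Hc a (mkpt x y z) <->
  Cb a x y z \/ Pp a x y z \/ Pp a (-x) y z \/ Pp a y x z \/ Pp a (-y) x z \/ Pp a z y x \/ Pp a (-z) y x).
Proof.
  intros ha. unfold Hc, Cb, Pp; ptsimpl. split.
  - intros Hx.
    destruct (Rle_dec (Rabs x) (5*a/24)) as [A1|A1];
    [destruct (Rle_dec (Rabs y) (5*a/24)) as [A2|A2];
     [destruct (Rle_dec (Rabs z) (5*a/24)) as [A3|A3]|]|].
    + left. abs_cases; repeat split; lra.
    + destruct (Rle_dec 0 z).
      * do 5 right; left. abs_cases; repeat split; lra.
      * do 6 right. abs_cases; repeat split; lra.
    + destruct (Rle_dec 0 y).
      * do 3 right; left. abs_cases; repeat split; lra.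
      * do 4 right; left. abs_cases; repeat split; lra.
    + destruct (Rle_dec 0 x).
      * do 1 right; left. abs_cases; repeat split; lra.
      * do 2 right; left. abs_cases; repeat split; lra.
  - intros H. repeat split; abs_cases; lra.
Qed.

Lemma indic_decomp a x y z : 0 < a ->
  indic (conv (tetrakis a) (mkpt x y z)) =
  indic (Cb a x y z) + (indic (Pp a x y z) + (indic (Pp a (-x) y z) + (indic (Pp a y x z) +
  (indic (Pp a (-y) x z) + (indic (Pp a z y x) + indic (Pp a (-z) y x)))))).
Proof.
  intros ha.
  rewrite (indic_iff _ (Hc a (mkpt x y z))) by (split; [apply conv_H| apply H_conv]; auto).
  rewrite (indic_iff _ _ (Hc_union a x y z ha)).
  unfold Cb, Pp.
  repeat rewrite indic_or; try reflexivity; intros [H1 H2];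
  repeat match goal with H : _ \/ _ |- _ => destruct H end; lra.
Qed.

Definition T3 (M : nat) (f : Z -> Z -> Z -> R) : R :=
  sumR (map (fun i => sumR (map (fun j => sumR (map (fun k => f i j k) (zrange M))) (zrange M))) (zrange M)).

Lemma T3_ext M f g : (forall i j k, f i j k = g i j k) -> T3 M f = T3 M g.
Proof.
  intros H. unfold T3. apply sum_ext; intros i _. apply sum_ext; intros j _. apply sum_ext; intros k _. auto.
Qed.

Lemma T3_add M f g : T3 M (fun i j k => f i j k + g i j k) = T3 M f + T3 M g.
Proof.
  unfold T3. rewrite <- sum_add. apply sum_ext; intros i _. rewrite <- sum_add.
  apply sum_ext; intros j _. apply sum_add.
Qed.

Lemma T3_swap12 M f : T3 M f = T3 M (fun i j k => f j i k).
Proof. unfold T3. apply sum_swap. Qed.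

Lemma T3_swap23 M f : T3 M f = T3 M (fun i j k => f i k j).
Proof. unfold T3. apply sum_ext; intros i _. apply sum_swap. Qed.

Lemma T3_neg1 M f : T3 M f = T3 M (fun i j k => f (- i)%Z j k).
Proof. unfold T3. apply sum_neg. Qed.

Definition gP (a N : R) (i j k : Z) : R := indic (Pp a (IZR i / N) (IZR j / N) (IZR k / N)).

Lemma opp_div N i : 0 < N -> - (IZR i / N) = IZR (- i) / N.
Proof. intros hN. rewrite opp_IZR. field. lra. Qed.

Lemma T3_decomp a (ha : 0 < a) N (hN : 0 < N) M :
  T3 M (fun i j k => indic (conv (tetrakis a) (mkpt (IZR i / N) (IZR j / N) (IZR k / N)))) =
  T3 M (fun i j k => indic (Cb a (IZR i / N) (IZR j / N) (IZR k / N))) + 6 * T3 M (gP a N).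
Proof.
  rewrite (T3_ext _ _ _ (fun i j k => indic_decomp a _ _ _ ha)).
  rewrite !T3_add.
  assert (E1 : T3 M (fun i j k => indic (Pp a (- (IZR i / N)) (IZR j / N) (IZR k / N))) = T3 M (gP a N)).
  { etransitivity; [|symmetry; apply T3_neg1].
    apply T3_ext; intros; cbv beta. unfold gP. rewrite (opp_div N) by exact hN. reflexivity. }
  assert (E2 : T3 M (fun i j k => indic (Pp a (IZR j / N) (IZR i / N) (IZR k / N))) = T3 M (gP a N)).
  { rewrite (T3_swap12 _ (gP a N)). reflexivity. }
  assert (E3 : T3 M (fun i j k => indic (Pp a (- (IZR j / N)) (IZR i / N) (IZR k / N))) = T3 M (gP a N)).
  { etransitivity; [apply T3_swap12|]. etransitivity; [|symmetry; apply T3_neg1].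
    apply T3_ext; intros; cbv beta. unfold gP. rewrite (opp_div N) by exact hN. reflexivity. }
  assert (E4 : T3 M (fun i j k => indic (Pp a (IZR k / N) (IZR j / N) (IZR i / N))) = T3 M (gP a N)).
  { etransitivity; [apply T3_swap23|]. etransitivity; [apply T3_swap12|].
    etransitivity; [apply T3_swap23|]. apply T3_ext; intros; cbv beta. reflexivity. }
  assert (E5 : T3 M (fun i j k => indic (Pp a (- (IZR k / N)) (IZR j / N) (IZR i / N))) = T3 M (gP a N)).
  { etransitivity; [apply T3_swap23|]. etransitivity; [apply T3_swap12|].
    etransitivity; [apply T3_swap23|]. etransitivity; [|symmetry; apply T3_neg1].
    apply T3_ext; intros; cbv beta. unfold gP. rewrite (opp_div N) by exact hN. reflexivity. }
  rewrite E1, E2, E3, E4, E5. fold (gP a N). ring.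
Qed.

Lemma sum_prod2 (A : R) (b : Z -> R) (c : Z -> R) l :
  sumR (map (fun j => sumR (map (fun k => A * (b j * c k)) l)) l) =
  A * (sumR (map b l) * sumR (map c l)).
Proof.
  transitivity (sumR (map (fun j => (A * sumR (map c l)) * b j) l)).
  - apply sum_ext; intros j _.
    transitivity (sumR (map (fun k => (A * b j) * c k) l)); [apply sum_ext; intros; ring|].
    rewrite sum_scal. ring.
  - rewrite sum_scal. ring.
Qed.

Lemma T3_cube a N M :
  T3 M (fun i j k => indic (Cb a (IZR i / N) (IZR j / N) (IZR k / N))) =
  cnt N (5*a/24) M * (cnt N (5*a/24) M * cnt N (5*a/24) M).
Proof.
  set (C := cnt N (5*a/24) M).
  transitivity (sumR (map (fun i => (C * C) * indic (- (5*a/24) <= IZR i / N <= 5*a/24)) (zrange M))).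
  - unfold T3, Cb. apply sum_ext; intros i _.
    rewrite (Rmult_comm (C*C)). unfold C, cnt. rewrite <- sum_prod2.
    apply sum_ext; intros j _. apply sum_ext; intros k _. rewrite !indic_and. reflexivity.
  - rewrite sum_scal. unfold C, cnt. ring.
Qed.

Lemma T3_pyr a N M :
  T3 M (gP a N) = sumR (map (fun i => indic (5*a/24 < IZR i / N <= 5*a/16) *
     (cnt N (2*(5*a/16 - IZR i / N)) M * cnt N (2*(5*a/16 - IZR i / N)) M)) (zrange M)).
Proof.
  unfold T3, gP, Pp. apply sum_ext; intros i _.
  unfold cnt. rewrite <- sum_prod2.
  apply sum_ext; intros j _. apply sum_ext; intros k _. rewrite !indic_and. reflexivity.
Qed.


Lemma lt_div x y N : 0 < N -> (x < y / N <-> N * x < y).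
Proof. intros hN. split; intro H.
  - apply (Rmult_lt_compat_l N) in H; [|lra]. replace (N * (y / N)) with y in H by (field; lra). lra.
  - apply (Rmult_lt_reg_l N); [lra|]. replace (N * (y / N)) with y by (field; lra). lra. Qed.
Lemma le_div x y N : 0 < N -> (y / N <= x <-> y <= N * x).
Proof. intros hN. split; intro H.
  - apply (Rmult_le_compat_l N) in H; [|lra]. replace (N * (y / N)) with y in H by (field; lra). lra.
  - apply (Rmult_le_reg_l N); [lra|]. replace (N * (y / N)) with y by (field; lra). lra. Qed.

Definition Pyr a N M := sumR (map (fun i => indic (5*a/24 < IZR i / N <= 5*a/16) *
     (cnt N (2*(5*a/16 - IZR i / N)) M * cnt N (2*(5*a/16 - IZR i / N)) M)) (zrange M)).

Definition Gu (a N : R) (i : Z) : R := let u := N * (5*a/16) - IZR i in -(16/3)*(u*u*u) + 4*(u*u).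
Definition Gl (a N : R) (i : Z) : R := let u := N * (5*a/16) - IZR i in -(16/3)*(u*u*u) + 12*(u*u).

Lemma pyr_bounds a N M : 0 < a -> 0 < N -> N * a <= INR M ->
  Gl a N (up (N*(5*a/16)) - 1) - Gl a N (up (N*(5*a/24)) - 1) <= Pyr a N M <=
  Gu a N (up (N*(5*a/16)) - 1) - Gu a N (up (N*(5*a/24)) - 1).
Proof.
  intros ha hN hM.
  set (p := up (N*(5*a/24))). set (q := (up (N*(5*a/16)) - 1)%Z).
  destruct (up_spec (N*(5*a/24))) as [P1 P2]. destruct (up_spec (N*(5*a/16))) as [Q1 Q2].
  fold p in P1, P2.
  assert (Hd : N * (5*a/16) <= N * a) by (apply Rmult_le_compat_l; lra).
  assert (Hc0 : 0 < N * (5*a/24)) by (apply Rmult_lt_0_compat; lra).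
  assert (Hcd : N * (5*a/24) < N * (5*a/16)) by (apply Rmult_lt_compat_l; lra).
  assert (HM : IZR (Z.of_nat M) = INR M) by (rewrite INR_IZR_INZ; auto).
  assert (Hw : forall i, (5*a/24 < IZR i / N <= 5*a/16) <-> (p <= i <= q)%Z).
  { intros i. unfold q, p. rewrite <- int_gt, <- int_le, lt_div, le_div by lra. tauto. }
  assert (Hp : (- Z.of_nat M <= p)%Z).
  { cut (0 < p)%Z; [lia|]. apply lt_IZR. simpl. lra. }
  assert (Hq : (q <= Z.of_nat M)%Z).
  { apply le_IZR. unfold q. rewrite minus_IZR. simpl. rewrite HM. lra. }
  assert (Hpq : (p - 1 <= q)%Z).
  { unfold q. destruct (Z_le_dec p (up (N * (5 * a / 16)))); [lia|]. exfalso.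
    assert (HH : (up (N * (5 * a / 16)) <= p - 1)%Z) by lia. apply IZR_le in HH. rewrite minus_IZR in HH. simpl in HH. lra. }
  assert (Hc : forall i, (p <= i <= q)%Z ->
     let u := N * (5*a/16) - IZR i in
     0 <= u /\ 4*u - 1 < cnt N (2*(5*a/16 - IZR i / N)) M <= 4*u + 1 /\ 1 <= cnt N (2*(5*a/16 - IZR i / N)) M).
  { intros i Hi u. apply Hw in Hi as [H1 H2]. rewrite lt_div in H1 by lra. rewrite le_div in H2 by lra.
    assert (hu : 0 <= u) by (unfold u; lra).
    assert (Er : N * (2*(5*a/16 - IZR i / N)) = 2 * u) by (unfold u; field; lra).
    assert (hu2 : 2 * u <= N * a).
    { unfold u. lra. }
    rewrite cnt_val; [| lra | | ].
    - rewrite Er. destruct (up_spec (2*u)) as [U1 U2].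
      assert (0 < up (2*u))%Z by (apply lt_IZR; simpl; lra).
      assert (1 <= IZR (up (2*u))) by (apply IZR_le; lia).
      repeat split; lra.
    - assert (IZR i / N <= 5*a/16) by (apply le_div; lra). lra.
    - rewrite Er. lra. }
  split.
  - unfold Pyr. apply (window_ge _ (Gl a N) p q M); auto.
    + intros i Hi. destruct (Hc i Hi) as [hu [[c1 c2] c3]].
      rewrite indic_T by (apply Hw; auto).
      set (C := cnt N (2*(5*a/16 - IZR i / N)) M) in *.
      set (u := N * (5*a/16) - IZR i) in *.
      unfold Gl. rewrite minus_IZR. simpl. fold u.
      replace (N * (5 * a / 16) - (IZR i - 1)) with (u + 1) by (unfold u; ring).
      assert (C * C >= 16*(u*u) - 8*u - 20/3).
      { destruct (Rle_dec 0 (4*u - 1)). nra. nra. }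
      nra.
    + intros i Hi. rewrite indic_F by (rewrite Hw; auto).
      pose proof (Rmult_le_pos _ _ (Rabs_pos (cnt N (2 * (5 * a / 16 - IZR i / N)) M)) (Rabs_pos (cnt N (2 * (5 * a / 16 - IZR i / N)) M))).
      rewrite <- Rabs_mult in H. rewrite Rabs_right in H by nra. lra.
  - unfold Pyr. apply (window_le _ (Gu a N) p q M); auto.
    + intros i Hi. destruct (Hc i Hi) as [hu [[c1 c2] c3]].
      rewrite indic_T by (apply Hw; auto).
      set (C := cnt N (2*(5*a/16 - IZR i / N)) M) in *.
      set (u := N * (5*a/16) - IZR i) in *.
      unfold Gu. rewrite minus_IZR. simpl. fold u.
      replace (N * (5 * a / 16) - (IZR i - 1)) with (u + 1) by (unfold u; ring).
      assert (C * C <= 16*(u*u) + 8*u + 1) by nra.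
      nra.
    + intros i Hi. rewrite indic_F by (rewrite Hw; auto). lra.
Qed.


Lemma cube_mono x y : 0 <= x <= y -> x*x*x <= y*y*y.
Proof. intros. assert (0 <= (y - x) * (y*y + x*y + x*x)) by (apply Rmult_le_pos; nra). nra. Qed.

Lemma lv_eq a n : lattice_vol (conv (tetrakis a)) n =
  / (INR (S n) ^ 3) * T3 (S n * S n) (fun i j k => indic (conv (tetrakis a) (mkpt (IZR i / INR (S n)) (IZR j / INR (S n)) (IZR k / INR (S n))))).
Proof. reflexivity. Qed.

Lemma T_bounds a N M : 0 < a -> 1 <= N -> N * a <= INR M ->
  let V := 125/1152 * a^3 in
  let K := 12*(5*a/24)^2 + 6*(5*a/24) + 1 + 96*(5*a/48)^2 + 96*(5*a/48) + 56
         + 12*(5*a/24)^2 + 1 + 72*(5*a/48 + 1)^2 + 32 in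
  V * N^3 - K * N^2 <= cnt N (5*a/24) M * (cnt N (5*a/24) M * cnt N (5*a/24) M) + 6 * Pyr a N M <= V * N^3 + K * N^2.
Proof.
  intros ha hN hM V K.
  set (c := 5*a/24). set (e := 5*a/48).
  assert (hc : 0 < c) by (unfold c; lra). assert (he : 0 < e) by (unfold e; lra).
  assert (hNc : N * c <= INR M) by (unfold c; nra).
  rewrite cnt_val by (unfold c in *; lra).
  destruct (up_spec (N * c)) as [X1 X2].
  set (X := IZR (up (N * c))) in *.
  assert (hX : 1 <= X).
  { assert (0 < up (N * c))%Z by (apply lt_IZR; simpl; fold X; nra). unfold X. apply IZR_le; lia. }
  set (C := 2 * X - 1).
  assert (Cup : C*(C*C) <= (2*N*c+1)*(2*N*c+1)*(2*N*c+1)).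
  { pose proof (cube_mono C (2*N*c+1) ltac:(unfold C; lra)). lra. }
  assert (Clo : C*(C*C) >= 8*(N*c)*(N*c)*(N*c) - 12*(N*c)*(N*c) - 1).
  { destruct (Rle_dec 1 (2*N*c)).
    - pose proof (cube_mono (2*N*c - 1) C ltac:(unfold C; lra)). nra.
    - assert (0 <= C*(C*C)) by (unfold C; assert (0 <= C) by (unfold C; lra); apply Rmult_le_pos; nra).
      assert (N*c*(N*c) <= N*c) by nra.
      assert (N*c*(N*c)*(N*c) <= N*c*(N*c)) by nra. nra. }
  pose proof (pyr_bounds a N M ha ltac:(lra) hM) as [Plo Pup].
  fold c in Plo, Pup.
  destruct (up_spec (N * (5*a/16))) as [Q1 Q2].
  unfold Gl, Gu in Plo, Pup. rewrite !minus_IZR in Plo, Pup. simpl in Plo, Pup. fold X in Plo, Pup.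
  set (uq := N * (5*a/16) - (IZR (up (N * (5*a/16))) - 1)) in *.
  set (U := N * (5*a/16) - (X - 1)) in *.
  assert (huq : 0 <= uq < 1) by (unfold uq; lra).
  assert (hU : N * e <= U <= N * e + 1) by (unfold U, e, c in *; lra).
  assert (hNe : 0 <= N * e) by nra.
  assert (U3up : U*U*U <= (N*e+1)*(N*e+1)*(N*e+1)) by (apply cube_mono; lra).
  assert (U3lo : (N*e)*(N*e)*(N*e) <= U*U*U) by (apply cube_mono; lra).
  assert (uq3 : uq*uq*uq <= 1) by (pose proof (cube_mono uq 1 ltac:(lra)); lra).
  assert (uq3' : 0 <= uq*uq*uq) by (apply Rmult_le_pos; nra).
  assert (U2 : U * U <= (N*e+1)*(N*e+1)) by nra.
  assert (Pyr_up : Pyr a N M <= 4 + 16/3 * ((N*e+1)*(N*e+1)*(N*e+1))) by nra.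
  assert (Pyr_lo : Pyr a N M >= - 16/3 + 16/3 * ((N*e)*(N*e)*(N*e)) - 12 * ((N*e+1)*(N*e+1))) by nra.
  assert (EV : V * N^3 = 8 * (N*c)*(N*c)*(N*c) + 32 * (N*e)*(N*e)*(N*e)) by (unfold V, c, e; field).
  assert (hN2 : 1 <= N^2) by nra.
  assert (hN12 : N <= N^2) by nra.
  assert (EK : K * N^2 = (12*c^2 + 1 + 72*(e+1)^2 + 32) * N^2 + (12*c^2 + 6*c + 1 + 96*e^2 + 96*e + 56) * N^2)
    by (unfold K, c, e; ring).
  assert (P1 : 0 <= (12*c^2 + 6*c + 1 + 96*e^2 + 96*e + 56) * N^2).
  { apply Rmult_le_pos; [|lra]. assert (0 <= c^2) by nra. assert (0 <= e^2) by nra. lra. }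
  assert (P2 : 0 <= (12*c^2 + 1 + 72*(e+1)^2 + 32) * N^2).
  { apply Rmult_le_pos; [|lra]. assert (0 <= c^2) by nra. assert (0 <= (e+1)^2) by nra. lra. }
  assert (E1 : (12*c^2 + 1 + 72*(e+1)^2 + 32) * N^2 = 12*(N*c)*(N*c) + 33 * N^2 + 72 * (((e+1)*N)*((e+1)*N))) by ring.
  assert (E2 : (12*c^2 + 6*c + 1 + 96*e^2 + 96*e + 56) * N^2 =
     12*(N*c)*(N*c) + 6*c*N^2 + 57*N^2 + 96*(N*e)*(N*e) + 96*e*N^2) by ring.
  assert (B1 : (N*e+1)*(N*e+1) <= ((e+1)*N)*((e+1)*N)) by (apply Rmult_le_compat; nra).
  assert (B2 : c * N <= c * N^2) by (apply Rmult_le_compat_l; lra).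
  assert (B3 : e * N <= e * N^2) by (apply Rmult_le_compat_l; lra).
  assert (Ecube : (2*N*c+1)*(2*N*c+1)*(2*N*c+1) = 8*(N*c)*(N*c)*(N*c) + 12*(N*c)*(N*c) + 6*(c*N) + 1) by ring.
  assert (Epyr : (N*e+1)*(N*e+1)*(N*e+1) = (N*e)*(N*e)*(N*e) + 3*(N*e)*(N*e) + 3*(e*N) + 1) by ring.
  assert (Esq : (N*e+1)*(N*e+1) = (N*e)*(N*e) + 2*(e*N) + 1) by ring.
  rewrite EK, EV. fold C. split; lra.
Qed.


Lemma div_nonneg p q : 0 <= p -> 0 < q -> 0 <= p / q.
Proof. intros. unfold Rdiv. apply Rmult_le_pos; [lra| left; apply Rinv_0_lt_compat; lra]. Qed.

Lemma volume a : 0 < a -> has_volume (conv (tetrakis a)) (125/1152 * a ^ 3).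
Proof.
  intros ha. unfold has_volume, Un_cv. intros eps Heps.
  set (K := 12*(5*a/24)^2 + 6*(5*a/24) + 1 + 96*(5*a/48)^2 + 96*(5*a/48) + 56
         + 12*(5*a/24)^2 + 1 + 72*(5*a/48 + 1)^2 + 32).
  assert (hK : 0 <= K) by (unfold K; assert (0 <= (5*a/48+1)^2) by nra; nra).
  set (x := K / eps + a).
  assert (hx : 0 < x) by (unfold x; assert (0 <= K/eps) by (apply div_nonneg; lra); lra).
  destruct (up_spec x) as [U1 U2].
  exists (Z.to_nat (up x)). intros n Hn. unfold R_dist.
  set (N := INR (S n)).
  assert (hN1 : 1 <= N) by (unfold N; rewrite S_INR; pose proof (pos_INR n); lra).
  assert (hNx : x < N).
  { assert (0 < up x)%Z by (apply lt_IZR; simpl; lra).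
    apply le_INR in Hn. rewrite INR_IZR_INZ, Z2Nat.id in Hn by lia.
    unfold N; rewrite S_INR. lra. }
  assert (hMa : N * a <= INR (S n * S n)).
  { rewrite mult_INR. fold N. apply Rmult_le_compat_l; [lra|].
    assert (0 <= K/eps) by (apply div_nonneg; lra). unfold x in hNx; lra. }
  rewrite lv_eq. fold N. rewrite T3_decomp by lra. rewrite T3_cube, T3_pyr. fold (Pyr a N (S n * S n)).
  pose proof (T_bounds a N (S n * S n) ha hN1 hMa) as TB. cbv zeta in TB. fold K in TB.
  set (T := cnt N (5 * a / 24) (S n * S n) * (cnt N (5 * a / 24) (S n * S n) * cnt N (5 * a / 24) (S n * S n)) +
         6 * Pyr a N (S n * S n)) in *.
  set (V := 125 / 1152 * a ^ 3) in *.
  assert (N3 : 0 < N^3) by (apply pow_lt; lra).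
  assert (E : / N^3 * T - V = (T - V * N^3) * / N^3) by (field; lra).
  rewrite E.
  assert (EK : K * N^2 * / N^3 = K / N) by (field; lra).
  assert (hI : 0 <= / N^3) by (left; apply Rinv_0_lt_compat; lra).
  assert (Hup : (T - V * N^3) * / N^3 <= K * N^2 * / N^3) by (apply Rmult_le_compat_r; lra).
  assert (Hlo : - (K * N^2) * / N^3 <= (T - V * N^3) * / N^3) by (apply Rmult_le_compat_r; lra).
  assert (HKN : K / N < eps).
  { apply (Rmult_lt_reg_l N); [lra|]. replace (N * (K / N)) with K by (field; lra).
    unfold x in hNx. assert (K / eps < N) by lra.
    apply (Rmult_lt_compat_l eps) in H; [|lra]. replace (eps * (K/eps)) with K in H by (field; lra). lra. }
  apply Rabs_def1.
  - rewrite EK in Hup. lra.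
  - replace (- (K * N^2) * / N^3) with (- (K / N)) in Hlo by (field; lra). lra.
Qed.


Theorem mainTheorem3 (a : R) (ha : 0 < a) :
  (* Voronoi cell of the origin w.r.t. L2 is the tetrakis hexahedron *)
  (forall x : pt, voronoi (L2 a) origin x <-> conv (tetrakis a) x) /\
  (* it is the cube [-5a/24,5a/24]^3 with a pyramid of height 5a/48 on each face *)
  (forall x : pt, conv (tetrakis a) x <->
     (in_cube (5*a/24) x \/
      exists F, In F (pyramids (5*a/24) (5*a/48)) /\ conv F x)) /\
  (* its volume is 125/1152 a^3 *)
  has_volume (conv (tetrakis a)) (125/1152 * a ^ 3) /\
  (* same, after translation, for every point of aZ^3 ∪ a(Z+1/2)^3 *)
  (forall p : pt, inZ3 a p \/ inZh3 a p ->
     forall x : pt, voronoi (L2 a) p x <-> conv (tetrakis a) (psub x p)).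
Proof.
  split; [intros x; apply part1; auto|].
  split; [intros x; apply part2; auto|].
  split; [apply volume; auto|].
  intros p Hp x. apply part4; auto.
Qed.
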